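(* Let $\mathcal M=(M,<,+,0,\ldots)$ be a definably complete locally o-minimal expansion of an ordered group. Let $(G,\tau_G)$ be a definable topological group, $(X,\tau_X)$ a definable topological space, and $\mathfrak a:G\times X\to X$ a definable continuous left $G$-action. Then the definable quotient of $X$ by $G$ exists. Furthermore, if $X$ is a definable group, $G$ is a definable normal subgroup of $X$ and $\mathfrak a$ is induced by the multiplication of $X$, then the definable quotient space is a definable topological group with multiplication $g_1G\cdot g_2G=g_1g_2G$.
   Context: ''Definable'' means definable in $\mathcal M$ with parameters. $\mathcal M$ is an expansion of an ordered group with dense order without endpoints; locally o-minimal: for every definable $Y\subseteq M$ and $a\in M$ there is an open interval $I\ni a$ with $Y\cap I$ a finite union of points and open intervals; definably complete: every definable subset of $M$ has sup and inf in $M\cup\{\pm\infty\}$. A definable topological space is a definable set with a topology having a definable family as open base. A definable topological group is a definable group (underlying set and multiplication definable) with a definable topology making multiplication and inversion continuous. The definable (left) quotient of $X$ by $G$ is a pair of a definable topological space $(Q,\tau_Q)$ and a definable continuous map $\pi:X\to Q$ such that for every definable topological space $(T,\tau_T)$ and definable continuous $\varphi:X\to T$ with $\varphi(gx)=\varphi(x)$ for all $g\in G$, $x\in X$, there is a definable continuous $\psi:Q\to T$ with $\varphi=\psi\circ\pi$. *)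

(* Defs.v *)
From Stdlib Require List.
From mathcomp Require Import all_boot.

Set Implicit Arguments.
Unset Strict Implicit.
Unset Printing Implicit Defensive.

(* Subsets of M^n are predicates on sequences (tuples are lists of length n). *)
Definition mset (M : Type) := seq M -> Prop.

Section Defs.
Variable M : Type.

Definition is_ordered_group (lt : M -> M -> Prop) (add : M -> M -> M)
    (zero : M) : Prop :=
  [/\ (forall x y z, add x (add y z) = add (add x y) z),
      (forall x, add zero x = x /\ add x zero = x),
      (forall x, exists y, add x y = zero /\ add y x = zero),
      (forall x, ~ lt x x) /\ (forall x y z, lt x y -> lt y z -> lt x z)
        /\ (forall x y, lt x y \/ x = y \/ lt y x)
    & (forall x y z, lt x y -> lt (add z x) (add z y) /\ lt (add x z) (add y z))].

Definition dense_no_endpoints (lt : M -> M -> Prop) : Prop :=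
  (forall x y, lt x y -> exists z, lt x z /\ lt z y) /\
  (forall x, exists y z, lt y x /\ lt x z).

(* A "structure" on M in the sense of van den Dries (Tame topology,
   Ch. 1): D n is a Boolean algebra of subsets of M^n, closed under
   cartesian product with M on either side, containing the diagonals,
   closed under projection.  Such a family is exactly the family of sets
   definable (with parameters, as all singletons are included) in some
   first-order expansion of M.                                          *)
Definition is_structure (D : nat -> mset M -> Prop) : Prop :=
  (forall n A, D n A -> forall s, A s -> size s = n) /\
      (forall n, D n (fun s => size s = n)) /\
      (forall n A B, D n A -> D n B -> D n (fun s => A s \/ B s)) /\
      (forall n A, D n A -> D n (fun s => size s = n /\ ~ A s)) /\
      (forall n A, D n A -> D n.+1 (fun s => exists x t, s = x :: t /\ A t)) /\
      (forall n A, D n A -> D n.+1 (fun s => exists t x, s = rcons t x /\ A t)) /\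
      (forall n i j, i < n -> j < n ->
          D n (fun s => size s = n /\ onth s i = onth s j))
    /\ (forall n A, D n.+1 A -> D n (fun t => exists x, A (rcons t x))).

Definition expands_ogroup (D : nat -> mset M -> Prop)
    (lt : M -> M -> Prop) (add : M -> M -> M) : Prop :=
  [/\ D 2 (fun s => exists x y, s = [:: x; y] /\ lt x y),
      D 3 (fun s => exists x y, s = [:: x; y; add x y])
    & (forall a, D 1 (fun s => s = [:: a]))].

Definition locally_o_minimal (D : nat -> mset M -> Prop)
    (lt : M -> M -> Prop) : Prop :=
  forall (Y : mset M) (a : M), D 1 Y ->
    exists b c, lt b a /\ lt a c /\
      exists (ps : seq M) (ivs : seq (M * M)),
        forall x, lt b x -> lt x c ->
          (Y [:: x] <-> (List.In x ps \/
                         exists uv, List.In uv ivs /\ lt uv.1 x /\ lt x uv.2)).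

Inductive ext := EFin of M | EPInf | ENInf.

Definition ext_le (lt : M -> M -> Prop) (u v : ext) : Prop :=
  match u, v with
  | ENInf, _ => True
  | _, EPInf => True
  | EFin x, EFin y => lt x y \/ x = y
  | _, _ => False
  end.

Definition is_sup (lt : M -> M -> Prop) (Y : mset M) (s : ext) : Prop :=
  (forall y, Y [:: y] -> ext_le lt (EFin y) s) /\
  (forall t, (forall y, Y [:: y] -> ext_le lt (EFin y) t) -> ext_le lt s t).

Definition is_inf (lt : M -> M -> Prop) (Y : mset M) (s : ext) : Prop :=
  (forall y, Y [:: y] -> ext_le lt s (EFin y)) /\
  (forall t, (forall y, Y [:: y] -> ext_le lt t (EFin y)) -> ext_le lt t s).

Definition definably_complete (D : nat -> mset M -> Prop)
    (lt : M -> M -> Prop) : Prop :=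
  forall Y, D 1 Y -> (exists s, is_sup lt Y s) /\ (exists s, is_inf lt Y s).

Definition dc_lomin_expansion (lt : M -> M -> Prop) (add : M -> M -> M)
    (zero : M) (D : nat -> mset M -> Prop) : Prop :=
  [/\ is_ordered_group lt add zero, dense_no_endpoints lt, is_structure D,
      expands_ogroup D lt add
    & locally_o_minimal D lt /\ definably_complete D lt].

(* Definable topological spaces: a definable set X in M^dim with a
   definable family {B_y : y in M^pdim} (B_y = {x | y ++ x in base})
   which is an open base of the topology.                              *)
Record dtop (D : nat -> mset M -> Prop) := DTop {
  dt_dim : nat;
  dt_set : mset M;
  dt_pdim : nat;
  dt_base : mset M;
  dt_set_def : D dt_dim dt_set;
  dt_base_def : D (dt_pdim + dt_dim) dt_base;
  dt_base_sub : forall y x, size y = dt_pdim -> dt_base (y ++ x) -> dt_set x;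
  dt_cover : forall x, dt_set x -> exists y, size y = dt_pdim /\ dt_base (y ++ x);
  dt_inter : forall y1 y2 x, size y1 = dt_pdim -> size y2 = dt_pdim ->
      dt_base (y1 ++ x) -> dt_base (y2 ++ x) ->
      exists y3, size y3 = dt_pdim /\ dt_base (y3 ++ x) /\
        forall z, dt_base (y3 ++ z) -> dt_base (y1 ++ z) /\ dt_base (y2 ++ z)
}.

Variable D : nat -> mset M -> Prop.

Definition dopen (T : dtop D) (U : mset M) : Prop :=
  (forall x, U x -> dt_set T x) /\
  (forall x, U x -> exists y, size y = dt_pdim T /\ dt_base T (y ++ x) /\
                     forall z, dt_base T (y ++ z) -> U z).

Definition dopen2 (T1 T2 : dtop D) (W : seq M -> seq M -> Prop) : Prop :=
  (forall x1 x2, W x1 x2 -> dt_set T1 x1 /\ dt_set T2 x2) /\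
  (forall x1 x2, W x1 x2 -> exists U1 U2, dopen T1 U1 /\ dopen T2 U2 /\
       U1 x1 /\ U2 x2 /\ forall z1 z2, U1 z1 -> U2 z2 -> W z1 z2).

Definition maps_into (T S : dtop D) (f : seq M -> seq M) : Prop :=
  forall x, dt_set T x -> dt_set S (f x).

Definition definable_map (T S : dtop D) (f : seq M -> seq M) : Prop :=
  maps_into T S f /\
  D (dt_dim T + dt_dim S) (fun p => exists x, dt_set T x /\ p = x ++ f x).

Definition continuous_map (T S : dtop D) (f : seq M -> seq M) : Prop :=
  maps_into T S f /\
  forall U, dopen S U -> dopen T (fun x => dt_set T x /\ U (f x)).

Definition dcmap (T S : dtop D) (f : seq M -> seq M) : Prop :=
  definable_map T S f /\ continuous_map T S f.

Definition maps2_into (T1 T2 S : dtop D) (f : seq M -> seq M -> seq M) : Prop :=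
  forall x1 x2, dt_set T1 x1 -> dt_set T2 x2 -> dt_set S (f x1 x2).

Definition definable_map2 (T1 T2 S : dtop D) (f : seq M -> seq M -> seq M) :=
  maps2_into T1 T2 S f /\
  D (dt_dim T1 + dt_dim T2 + dt_dim S)
    (fun p => exists x1 x2, dt_set T1 x1 /\ dt_set T2 x2 /\
                            p = x1 ++ x2 ++ f x1 x2).

Definition continuous_map2 (T1 T2 S : dtop D) (f : seq M -> seq M -> seq M) :=
  maps2_into T1 T2 S f /\
  forall U, dopen S U ->
    dopen2 T1 T2 (fun x1 x2 => dt_set T1 x1 /\ dt_set T2 x2 /\ U (f x1 x2)).

Definition dcmap2 (T1 T2 S : dtop D) (f : seq M -> seq M -> seq M) :=
  definable_map2 T1 T2 S f /\ continuous_map2 T1 T2 S f.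

Definition is_dtgroup (G : dtop D) (mul : seq M -> seq M -> seq M)
    (inv : seq M -> seq M) (e : seq M) : Prop :=
  [/\ dt_set G e,
      (forall x y z, dt_set G x -> dt_set G y -> dt_set G z ->
         mul x (mul y z) = mul (mul x y) z),
      (forall x, dt_set G x -> mul e x = x /\ mul x e = x),
      (forall x, dt_set G x -> mul x (inv x) = e /\ mul (inv x) x = e)
    & dcmap2 G G G mul /\ continuous_map G G inv].

Definition is_daction (G : dtop D) (mul : seq M -> seq M -> seq M)
    (e : seq M) (X : dtop D) (a : seq M -> seq M -> seq M) : Prop :=
  [/\ dcmap2 G X X a,
      (forall x, dt_set X x -> a e x = x)
    & (forall g h x, dt_set G g -> dt_set G h -> dt_set X x ->
         a g (a h x) = a (mul g h) x)].

Definition is_dquotient (G X : dtop D) (a : seq M -> seq M -> seq M)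
    (Q : dtop D) (pi : seq M -> seq M) : Prop :=
  [/\ dcmap X Q pi,
      (forall g x, dt_set G g -> dt_set X x -> pi (a g x) = pi x)
    & (forall (T : dtop D) (phi : seq M -> seq M), dcmap X T phi ->
         (forall g x, dt_set G g -> dt_set X x -> phi (a g x) = phi x) ->
         exists psi, dcmap Q T psi /\
           forall x, dt_set X x -> phi x = psi (pi x))].

End Defs.

(* Main.v *)
Require Import Defs.
From mathcomp Require Import all_boot zify.
From Stdlib Require Import FunctionalExtensionality PropExtensionality ClassicalEpsilon Classical.

Set Implicit Arguments.
Unset Strict Implicit.
Unset Printing Implicit Defensive.

Section Calc.
Variable M : Type.
Variable D : nat -> mset M -> Prop.
Hypothesis HD : is_structure D.
Variable z0 : M.
Hypothesis Hsing : forall m : M, D 1 (fun s => s = [:: m]).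

Lemma D_ext n (A B : mset M) : (forall s, A s <-> B s) -> D n A -> D n B.
Proof.
move=> H; have -> : B = A; last by [].
apply: functional_extensionality => s; apply: propositional_extensionality.
by split => /H.
Qed.

Lemma D_size n A s : D n A -> A s -> size s = n.
Proof. by case: HD => H _ HA; apply: H. Qed.

Definition Def n (P : seq M -> Prop) := D n (fun s => size s = n /\ P s).

Lemma Def_D n A : D n A -> Def n A.
Proof.
move=> HA; apply: (D_ext _ HA) => s; split; last by case.
by move=> h; split => //; apply: (D_size HA h).
Qed.

Lemma D_Def n A : Def n A -> D n (fun s => size s = n /\ A s).
Proof. by []. Qed.

Lemma Def_ext n (P Q : seq M -> Prop) :
  (forall s, size s = n -> (P s <-> Q s)) -> Def n P -> Def n Q.
Proof.
move=> H; apply: D_ext => s; split; case=> h1 h2; split => //; by apply/(H _ h1).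
Qed.

Lemma Def_true n : Def n (fun _ => True).
Proof.
case: HD => _ [H _]; apply: D_ext (H n) => s; split; [by [] | by case].
Qed.

Lemma Def_or n P Q : Def n P -> Def n Q -> Def n (fun s => P s \/ Q s).
Proof.
case: HD => _ [_ [H _]] hP hQ; apply: D_ext (H _ _ _ hP hQ) => s.
split; [by case=> [][]; auto | by case=> h [] ?; auto].
Qed.

Lemma Def_not n P : Def n P -> Def n (fun s => ~ P s).
Proof.
case: HD => _ [_ [_ [H _]]] hP; apply: D_ext (H _ _ hP) => s.
split; case=> h1 h2; split => //; [by move=> p; apply: h2 | by case].
Qed.

Lemma Def_and n P Q : Def n P -> Def n Q -> Def n (fun s => P s /\ Q s).
Proof.
move=> hP hQ; apply: Def_ext (Def_not (Def_or (Def_not hP) (Def_not hQ))) => s _.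
split; [by move/not_or_and => [] /NNPP ? /NNPP ? | by case=> ?? []].
Qed.

Lemma Def_imp n P Q : Def n P -> Def n Q -> Def n (fun s => P s -> Q s).
Proof.
move=> hP hQ; apply: Def_ext (Def_or (Def_not hP) hQ) => s _.
split; [by case=> // ?? | by move=> h; case: (classic (P s)); auto].
Qed.

Lemma Def_ex n P : Def n.+1 P -> Def n (fun s => exists x, P (rcons s x)).
Proof.
case: HD => _ [_ [_ [_ [_ [_ [_ H]]]]]] hP; apply: D_ext (H _ _ hP) => s.
split.
  by case=> x [h1 h2]; split; [move: h1; rewrite size_rcons; case | exists x].
by case=> h [x hx]; exists x; rewrite size_rcons h.
Qed.

Lemma Def_all n P : Def n.+1 P -> Def n (fun s => forall x, P (rcons s x)).
Proof.
move=> hP; apply: Def_ext (Def_not (Def_ex (Def_not hP))) => s _.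
split; [by move=> h x; apply: NNPP => hn; apply: h; exists x
       | by move=> h [x]; apply; apply: h].
Qed.

Lemma Def_exk n k P : Def (n + k) P ->
  Def n (fun s => exists w, size w = k /\ P (s ++ w)).
Proof.
elim: k n P => [|k IH] n P.
  rewrite addn0 => hP; apply: Def_ext hP => s _; split.
    by move=> h; exists [::]; rewrite cats0.
  by case=> w [/size0nil -> ]; rewrite cats0.
rewrite addnS => /Def_ex /IH hP; apply: Def_ext hP => s _; split.
  by case=> w [hw [x hx]]; exists (rcons w x); rewrite size_rcons hw -rcons_cat.
case=> w [hw hx]; case/lastP: w hw hx => [|w x]; first by [].
by rewrite size_rcons => -[hw] hx; exists w; split => //; exists x; rewrite rcons_cat.
Qed.

Lemma Def_front m k P : Def m P -> Def (k + m) (fun s => P (drop k s)).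
Proof.
elim: k => [|k IH] hP; first by apply: Def_ext hP => s _; rewrite drop0.
case: HD => _ [_ [_ [_ [H _]]]].
apply: D_ext (H _ _ (IH hP)) => s; split.
  case=> x [t [-> [h1 h2]]]; by rewrite /= h1.
case: s => [|x t] [h1 h2]; first by []. exists x, t; by move: h1 h2 => /= [h1] h2.
Qed.

Lemma Def_back m k P : Def m P -> Def (m + k) (fun s => P (take m s)).
Proof.
elim: k => [|k IH] hP.
  rewrite addn0; apply: Def_ext hP => s <-; by rewrite take_size.
case: HD => _ [_ [_ [_ [_ [H _]]]]].
rewrite addnS; apply: D_ext (H _ _ (IH hP)) => s; split.
  case=> t [x [-> [h1 h2]]]; rewrite size_rcons h1; split => //.
  by rewrite -cats1 takel_cat // h1 leq_addr.
case/lastP: s => [|t x]; first by case.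
rewrite size_rcons => -[[h1] h2]; exists t, x; split => //; split => //.
by move: h2; rewrite -cats1 takel_cat // h1 leq_addr.
Qed.

Lemma onth_some (s : seq M) i : i < size s -> onth s i = Some (nth z0 s i).
Proof. by elim: s i => [|x s IH] [|i] //= /IH. Qed.

Lemma Def_diag n i j : i < n -> j < n -> Def n (fun s => nth z0 s i = nth z0 s j).
Proof.
case: HD => _ [_ [_ [_ [_ [_ [H _]]]]]] hi hj.
apply: D_ext (H _ _ _ hi hj) => s; split; case=> h1 h2; split => //.
  by rewrite -!odflt_onth h2.
by rewrite !onth_some ?h1 // h2.
Qed.

Lemma Def_const n i c : i < n -> Def n (fun s => nth z0 s i = c).
Proof.
move=> hi.
have h1 : Def 1 (fun s => nth z0 s 0 = c).
  apply: D_ext (Hsing c) => s; split; first by move=> ->.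
  by case: s => [|x [|y t]] [] //= _ ->.
have h2 := Def_back (n - i.+1) (Def_front i h1).
have e : i + 1 + (n - i.+1) = n by rewrite addn1 subnKC.
rewrite e in h2; apply: Def_ext h2 => s _.
by rewrite nth_drop addn0 nth_take ?addn1.
Qed.

Lemma Def_false n : Def n (fun _ => False).
Proof. by apply: Def_ext (Def_not (Def_true n)) => s _; split. Qed.

Lemma Def_bigand m K (P : nat -> seq M -> Prop) :
  (forall j, j < K -> Def m (P j)) -> Def m (fun s => forall j, j < K -> P j s).
Proof.
elim: K => [|K IH] H.
  by apply: Def_ext (Def_true m) => s _; split.
have := Def_and (IH (fun j hj => H j (ltnW hj))) (H K (ltnSn K)).
apply: Def_ext => s _; split.
  by case=> h1 h2 j; rewrite ltnS leq_eqVlt => /orP [/eqP -> | /h1].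
by move=> h; split; [move=> j hj; apply: h; apply: ltnW | apply: h].
Qed.

Definition argv (s : seq M) (a : nat + M) : M :=
  match a with inl i => nth z0 s i | inr c => c end.

Definition arg_ok n (a : nat + M) : bool :=
  match a with inl i => i < n | inr _ => true end.

Lemma argv_cat s w a : arg_ok (size s) a -> argv (s ++ w) a = argv s a.
Proof. by case: a => //= i hi; rewrite nth_cat hi. Qed.

Lemma Def_argeq n i a : i < n -> arg_ok n a -> Def n (fun s => nth z0 s i = argv s a).
Proof.
case: a => [j|c] /= hi hj; [exact: Def_diag | exact: Def_const].
Qed.

Lemma Def_atom n k (R : seq M -> Prop) (args : seq (nat + M)) :
  Def k R -> size args = k -> all (arg_ok n) args ->
  Def n (fun s => R (map (argv s) args)).
Proof.
move=> hR hs hok.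
pose P := fun s' => R (drop n s') /\
   (forall j, j < k -> nth z0 s' (n + j) = argv s' (nth (inl 0) args j)).
have hP : Def (n + k) P.
  apply: Def_and; first exact: Def_front.
  apply: Def_bigand => j hj; apply: Def_argeq; first by rewrite ltn_add2l.
  have : arg_ok n (nth (inl 0) args j) by apply: (all_nthP _ hok); rewrite hs.
  by case: (nth _ _ _) => //= i hi; apply: leq_trans hi (leq_addr _ _).
apply: Def_ext (Def_exk hP) => s hsz; split.
  case=> w [hw [h1 h2]]; move: h1; rewrite drop_size_cat //.
  suff -> : map (argv s) args = w by [].
  apply: (@eq_from_nth _ z0); first by rewrite size_map hs hw.
  move=> j; rewrite size_map hs => hj.
  rewrite (nth_map (inl 0)) ?hs // -(argv_cat w); last first.
    by rewrite hsz; apply: (all_nthP _ hok); rewrite hs.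
  by rewrite -h2 // nth_cat hsz ltnNge leq_addr /= addKn.
move=> h; exists (map (argv s) args); split; first by rewrite size_map.
split; first by rewrite drop_size_cat.
move=> j hj; rewrite nth_cat hsz ltnNge leq_addr /= addKn argv_cat; last first.
  by rewrite hsz; apply: (all_nthP _ hok); rewrite hs.
by rewrite (nth_map (inl 0)) ?hs.
Qed.


Inductive fm :=
| FRel (k : nat) (R : seq M -> Prop) (HR : Def k R) (args : seq (nat + M))
| FY (a : nat + M)
| FNot (f : fm) | FAnd (f g : fm) | FOr (f g : fm) | FImp (f g : fm)
| FEx (f : fm) | FAll (f : fm).

Fixpoint sem (Y : M -> Prop) (s : seq M) (f : fm) : Prop :=
  match f with
  | FRel _ R _ args => R (map (argv s) args)
  | FY a => Y (argv s a)
  | FNot f => ~ sem Y s f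
  | FAnd f g => sem Y s f /\ sem Y s g
  | FOr f g => sem Y s f \/ sem Y s g
  | FImp f g => sem Y s f -> sem Y s g
  | FEx f => exists x, sem Y (rcons s x) f
  | FAll f => forall x, sem Y (rcons s x) f
  end.

Fixpoint wf (n : nat) (f : fm) : bool :=
  match f with
  | FRel k _ _ args => (size args == k) && all (arg_ok n) args
  | FY a => arg_ok n a
  | FNot f => wf n f
  | FAnd f g | FOr f g | FImp f g => wf n f && wf n g
  | FEx f | FAll f => wf n.+1 f
  end.

Definition shift_arg k (a : nat + M) : nat + M :=
  match a with inl i => inl (k + i) | inr c => inr c end.

Fixpoint shift (k : nat) (f : fm) : fm :=
  match f with
  | FRel _ _ HR args => FRel HR (map (shift_arg k) args)
  | FY a => FY (shift_arg k a)
  | FNot f => FNot (shift k f)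
  | FAnd f g => FAnd (shift k f) (shift k g)
  | FOr f g => FOr (shift k f) (shift k g)
  | FImp f g => FImp (shift k f) (shift k g)
  | FEx f => FEx (shift k f)
  | FAll f => FAll (shift k f)
  end.

Lemma argv_shift p s a : argv (p ++ s) (shift_arg (size p) a) = argv s a.
Proof. by case: a => //= i; rewrite nth_cat ltnNge leq_addr /= addKn. Qed.

Lemma sem_shift Y f : forall p s, sem Y (p ++ s) (shift (size p) f) <-> sem Y s f.
Proof.
elim: f => [k R HR args|a|f IH|f IHf g IHg|f IHf g IHg|f IHf g IHg|f IH|f IH] p s /=.
- by rewrite -map_comp (eq_map (argv_shift p s)).
- by rewrite argv_shift.
- by rewrite IH.
- by rewrite IHf IHg.
- by rewrite IHf IHg.
- by rewrite IHf IHg.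
- by split; case=> x hx; exists x; move: hx; rewrite rcons_cat IH.
- by split=> h x; move: (h x); rewrite rcons_cat IH.
Qed.

Lemma arg_ok_shift n k a : arg_ok n a -> arg_ok (k + n) (shift_arg k a).
Proof. by case: a => //= i; rewrite ltn_add2l. Qed.

Lemma wf_shift k f : forall n, wf n f -> wf (k + n) (shift k f).
Proof.
elim: f => [k' R HR args|a|f IH|f IHf g IHg|f IHf g IHg|f IHf g IHg|f IH|f IH] n /=.
- case/andP => /eqP <- h; rewrite size_map eqxx /= all_map.
  by elim: args h => //= a l IHl /andP [h1 h2]; rewrite arg_ok_shift // IHl.
- exact: arg_ok_shift.
- exact: IH.
- by case/andP => /IHf -> /IHg ->.
- by case/andP => /IHf -> /IHg ->.
- by case/andP => /IHf -> /IHg ->.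
- by move/IH; rewrite addnS.
- by move/IH; rewrite addnS.
Qed.

Lemma take_rcons_le k (s : seq M) x : k <= size s -> take k (rcons s x) = take k s.
Proof. by move=> h; rewrite -cats1 takel_cat. Qed.

Theorem fm_def k (A : seq M -> Prop) (HA : Def k.+1 A) f : forall n, k <= n -> wf n f ->
  Def n (fun s => sem (fun y => A (take k s ++ [:: y])) s f).
Proof.
elim: f => [k' R HR args|a|f IH|f IHf g IHg|f IHf g IHg|f IHf g IHg|f IH|f IH] n hk /=.
- by case/andP => /eqP h1 h2; apply: (Def_atom HR h1 h2).
- move=> ha.
  have h1 : size (map inl (iota 0 k) ++ [:: a]) = k.+1.
    by rewrite size_cat size_map size_iota addn1.
  have h2 : all (arg_ok n) (map inl (iota 0 k) ++ [:: a]).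
    rewrite all_cat; apply/andP; split; last by rewrite /= ha.
    rewrite all_map; apply/allP => i.
    by rewrite mem_iota /= => /leq_trans; apply.
  apply: (Def_ext _ (Def_atom HA h1 h2)) => s hs.
  rewrite map_cat -map_comp /=.
  by rewrite (@map_nth_iota0 _ z0 s k) // hs.
- by move=> /IH h; apply: Def_not; apply: h.
- by case/andP => /IHf h1 /IHg h2; apply: Def_and; [apply: h1 | apply: h2].
- by case/andP => /IHf h1 /IHg h2; apply: Def_or; [apply: h1 | apply: h2].
- by case/andP => /IHf h1 /IHg h2; apply: Def_imp; [apply: h1 | apply: h2].
- move=> /(IH n.+1 (leqW hk)) /Def_ex; apply: Def_ext => s hs.
  by split; case=> x hx; exists x; move: hx; rewrite take_rcons_le // hs.
- move=> /(IH n.+1 (leqW hk)) /Def_all; apply: Def_ext => s hs.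
  by split=> h x; move: (h x); rewrite take_rcons_le // hs.
Qed.

End Calc.

Section Ch.
Variables (M : Type) (lt : M -> M -> Prop) (add : M -> M -> M) (zero : M)
  (D : nat -> mset M -> Prop).
Hypothesis HM : dc_lomin_expansion lt add zero D.

Lemma HD : is_structure D. Proof. by case: HM. Qed.
Lemma Hsing : forall m : M, D 1 (fun s => s = [:: m]).
Proof. by case: HM => _ _ _ []. Qed.

Notation Def := (Def D).
Notation fm := (fm D).
Notation sem := (@sem M D zero).
Notation v i := (@inl nat M i).
Notation cst m := (@inr nat M m).

Lemma HLt : Def 2 (fun s => lt (nth zero s 0) (nth zero s 1)).
Proof.
case: HM => _ _ _ [h _ _] _; refine (Def_ext _ (Def_D HD h)) => s hs; split.
  by case=> x [y [-> h']].
by case: s hs => [|x [|y [|w t]]] //= _ h'; exists x, y.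
Qed.

Lemma HAdd : Def 3 (fun s => nth zero s 2 = add (nth zero s 0) (nth zero s 1)).
Proof.
case: HM => _ _ _ [_ h _] _; apply: (Def_ext _ (Def_D HD h)) => s hs; split.
  by case=> x [y ->].
by case: s hs => [|x [|y [|w [|u t]]]] //= _ ->; exists x, y.
Qed.

Lemma HEq : Def 2 (fun s => nth zero s 0 = nth zero s 1).
Proof. exact: (Def_diag HD zero). Qed.

Definition Lt a b : fm := FRel HLt [:: a; b].
Definition Eqa a b : fm := FRel HEq [:: a; b].
Definition Le a b : fm := FOr (Lt a b) (Eqa a b).
Definition Add3 a b c : fm := FRel HAdd [:: a; b; c].

Definition c0 : M := epsilon (inhabits zero) (fun c => lt zero c).

Definition le x y := lt x y \/ x = y.
Definition isinf (Z : M -> Prop) t :=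
  (forall y, Z y -> le t y) /\ (forall u, (forall y, Z y -> le u y) -> le u t).
Definition issup (S : M -> Prop) t :=
  (forall y, S y -> le y t) /\ (forall u, (forall y, S y -> le y u) -> le t u).
Definition Rset (Z : M -> Prop) t tc u :=
  lt t u /\ le u tc /\ (forall x, lt t x -> lt x u -> Z x).
Definition Eset dd e := lt zero e /\ exists s, s = add e e /\ le s dd.
Definition chpos (Z : M -> Prop) j :=
  exists t, isinf Z t /\ ((Z t /\ j = t) \/ (~ Z t /\ exists tc r,
    tc = add t c0 /\ (issup (Rset Z t tc) r /\ exists nt dd e,
      zero = add t nt /\ (dd = add nt r /\ (issup (Eset dd) e /\ j = add t e))))).
Definition spec1 (Y : M -> Prop) z :=
  ((exists y, Y y /\ le zero y) /\ chpos (fun y => Y y /\ le zero y) z) \/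
  (~ (exists y, Y y /\ le zero y) /\
     exists nz, zero = add z nz /\ chpos (fun w => exists x, zero = add w x /\ Y x) nz).

(* formula templates; Zf i d : Z applied to level i at depth d *)
Definition IsInfF (Zf : nat -> nat -> fm) t d : fm :=
  FAnd (FAll (FImp (Zf d d.+1) (Le t (v d))))
       (FAll (FImp (FAll (FImp (Zf d.+1 d.+2) (Le (v d) (v d.+1)))) (Le (v d) t))).
Definition IsSupF (Sf : nat -> nat -> fm) t d : fm :=
  FAnd (FAll (FImp (Sf d d.+1) (Le (v d) t)))
       (FAll (FImp (FAll (FImp (Sf d.+1 d.+2) (Le (v d.+1) (v d)))) (Le t (v d)))).
Definition RsetF (Zf : nat -> nat -> fm) t tc i dd : fm :=
  FAnd (Lt t (v i)) (FAnd (Le (v i) tc)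
    (FAll (FImp (Lt t (v dd)) (FImp (Lt (v dd) (v i)) (Zf dd dd.+1))))).
Definition EsetF ddv i dd : fm :=
  FAnd (Lt (cst zero) (v i)) (FEx (FAnd (Add3 (v i) (v i) (v dd)) (Le (v dd) ddv))).
Definition ChPosF (Zf : nat -> nat -> fm) j d : fm :=
  FEx (FAnd (IsInfF Zf (v d) d.+1)
   (FOr (FAnd (Zf d d.+1) (Eqa j (v d)))
        (FAnd (FNot (Zf d d.+1))
          (FEx (FEx (FAnd (Add3 (v d) (cst c0) (v d.+1))
            (FAnd (IsSupF (RsetF Zf (v d) (v d.+1)) (v d.+2) d.+3)
              (FEx (FEx (FEx (FAnd (Add3 (v d) (v d.+3) (cst zero))
                 (FAnd (Add3 (v d.+3) (v d.+2) (v d.+4))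
                   (FAnd (IsSupF (EsetF (v d.+4)) (v (d+5)) (d+6))
                         (Add3 (v d) (v (d+5)) j)))))))))))))).
Definition Pf (i d : nat) : fm := FAnd (FY D (v i)) (Le (cst zero) (v i)).
Definition Nf (i d : nat) : fm := FEx (FAnd (Add3 (v i) (v d) (cst zero)) (FY D (v d))).
Definition Spec1F : fm :=
  FOr (FAnd (FEx (Pf 1 2)) (ChPosF Pf (v 0) 1))
      (FAnd (FNot (FEx (Pf 1 2)))
            (FEx (FAnd (Add3 (v 0) (v 1) (cst zero)) (ChPosF Nf (v 1) 2)))).

Lemma Spec1F_sem Y z : sem Y [:: z] Spec1F <-> spec1 Y z.
Proof. reflexivity. Qed.

Lemma Spec1F_wf : wf 1 Spec1F.
Proof. by []. Qed.


Lemma Hog : is_ordered_group lt add zero. Proof. by case: HM. Qed.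
Lemma addA x y z : add x (add y z) = add (add x y) z.
Proof. by case: Hog => h _ _ _ _. Qed.
Lemma add0x x : add zero x = x. Proof. by case: Hog => _ h _ _ _; case: (h x). Qed.
Lemma addx0 x : add x zero = x. Proof. by case: Hog => _ h _ _ _; case: (h x). Qed.
Lemma lt_irr x : ~ lt x x. Proof. by case: Hog => _ _ _ [h _] _. Qed.
Lemma lt_trans x y z : lt x y -> lt y z -> lt x z.
Proof. by case: Hog => _ _ _ [_ [h _]] _; apply: h. Qed.
Lemma lt_tri x y : lt x y \/ x = y \/ lt y x.
Proof. by case: Hog => _ _ _ [_ [_ h]] _. Qed.
Lemma ltD2l z x y : lt x y -> lt (add z x) (add z y).
Proof. by case: Hog => _ _ _ _ h /(h _ _ z) []. Qed.
Lemma ltD2r z x y : lt x y -> lt (add x z) (add y z).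
Proof. by case: Hog => _ _ _ _ h /(h _ _ z) []. Qed.

Definition neg x := epsilon (inhabits zero) (fun y => add x y = zero /\ add y x = zero).
Lemma neg_spec x : add x (neg x) = zero /\ add (neg x) x = zero.
Proof.
apply: (@epsilon_spec M (inhabits zero) (fun y => add x y = zero /\ add y x = zero)).
by case: Hog => _ _ h _ _; apply: h.
Qed.
Lemma addxN x : add x (neg x) = zero. Proof. by case: (neg_spec x). Qed.
Lemma addNx x : add (neg x) x = zero. Proof. by case: (neg_spec x). Qed.
Lemma addKl z x : add (neg z) (add z x) = x.
Proof. by rewrite addA addNx add0x. Qed.
Lemma addKr z x : add z (add (neg z) x) = x.
Proof. by rewrite addA addxN add0x. Qed.
Lemma addIl z x y : add z x = add z y -> x = y.
Proof. by move=> h; rewrite -(addKl z x) h addKl. Qed.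
Lemma addIr z x y : add x z = add y z -> x = y.
Proof.
move=> h; have : add (add x z) (neg z) = add (add y z) (neg z) by rewrite h.
by rewrite -!addA addxN !addx0.
Qed.
Lemma neg_uniq x y : add x y = zero -> y = neg x.
Proof. by move=> h; apply: (addIl (z:=x)); rewrite h addxN. Qed.
Lemma neg_uniqL x y : add y x = zero -> y = neg x.
Proof. by move=> h; apply: (addIr (z:=x)); rewrite h addNx. Qed.
Lemma ltD2l_inv z x y : lt (add z x) (add z y) -> lt x y.
Proof. by move/(ltD2l (neg z)); rewrite !addKl. Qed.
Lemma ltD2r_inv z x y : lt (add x z) (add y z) -> lt x y.
Proof. by move/(ltD2r (neg z)); rewrite -!addA !addxN !addx0. Qed.

Lemma le_refl x : le x x. Proof. by right. Qed.
Lemma lt_le x y : lt x y -> le x y. Proof. by left. Qed.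
Lemma le_lt_trans x y z : le x y -> lt y z -> lt x z.
Proof. by case=> [h|->] // h'; apply: lt_trans h h'. Qed.
Lemma lt_le_trans x y z : lt x y -> le y z -> lt x z.
Proof. by move=> h [h'|<-] //; apply: lt_trans h h'. Qed.
Lemma le_trans x y z : le x y -> le y z -> le x z.
Proof. by case=> [h|->] // h'; left; apply: lt_le_trans h h'. Qed.
Lemma le_antisym x y : le x y -> le y x -> x = y.
Proof.
case=> [h|->] // [h'|->] //; case: (lt_irr (lt_trans h h')).
Qed.
Lemma not_lt_le x y : ~ lt x y -> le y x.
Proof. by case: (lt_tri x y) => [h|[->|h]] hn; [case: hn | right | left]. Qed.
Lemma not_lt_le_inv x y : ~ le y x -> lt x y.
Proof. by move=> h; apply: NNPP => h'; apply: h; apply: not_lt_le. Qed.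
Lemma lt_not_le x y : lt x y -> ~ le y x.
Proof. by move=> h h'; apply: (lt_irr (lt_le_trans h h')). Qed.
Lemma le_not_lt x y : le x y -> ~ lt y x.
Proof. by move=> h h'; apply: (lt_irr (le_lt_trans h h')). Qed.
Lemma leD2l z x y : le x y -> le (add z x) (add z y).
Proof. by case=> [h|->]; [left; apply: ltD2l | right]. Qed.
Lemma leD2r z x y : le x y -> le (add x z) (add y z).
Proof. by case=> [h|->]; [left; apply: ltD2r | right]. Qed.

Lemma c0_pos : lt zero c0.
Proof.
apply: (@epsilon_spec M (inhabits zero) (fun c => lt zero c)).
case: HM => _ [_ h] _ _ _; case: (h zero) => y [w [_ hw]]; by exists w.
Qed.

Lemma isinf_uniq Z t t' : isinf Z t -> isinf Z t' -> t = t'.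
Proof. by case=> h1 h2 [h1' h2']; apply: le_antisym; [apply: h2' | apply: h2]. Qed.
Lemma issup_uniq Z t t' : issup Z t -> issup Z t' -> t = t'.
Proof. by case=> h1 h2 [h1' h2']; apply: le_antisym; [apply: h2 | apply: h2']. Qed.


Definition D1 (Y : M -> Prop) := Def 1 (fun s => Y (nth zero s 0)).

Lemma D1_ext (P Q : M -> Prop) : (forall y, P y <-> Q y) -> D1 P -> D1 Q.
Proof. by move=> h; apply: Def_ext => s _. Qed.

Lemma D1_fm (Z : M -> Prop) (f : fm) : D1 Z -> wf 1 f -> D1 (fun y => sem Z [:: y] f).
Proof.
move=> hZ hf.
have := @fm_def M D HD zero Hsing 0 (fun s => Z (nth zero s 0)) hZ f 1 (leq0n 1) hf.
by apply: Def_ext => -[|y [|w t]] //= _.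
Qed.

Lemma D1_family k A (p : seq M) : Def k.+1 A -> size p = k -> D1 (fun y => A (p ++ [:: y])).
Proof.
move=> hA hp.
have h1 : size (map inr p ++ [:: v 0]) = k.+1 by rewrite size_cat size_map hp addn1.
have h2 : all (arg_ok 1) (map inr p ++ [:: v 0]) by rewrite all_cat all_map; apply/andP; split => //; elim: p {hp h1}.
rewrite /D1; refine (Def_ext _ (Def_atom HD zero Hsing hA h1 h2)) => s _.
by rewrite map_cat -map_comp /= map_id.
Qed.

Lemma dc_inf_sup : definably_complete D lt. Proof. by case: HM => _ _ _ _ []. Qed.
Lemma loc_omin : locally_o_minimal D lt. Proof. by case: HM => _ _ _ _ []. Qed.

Lemma sup_exists S : D1 S -> (exists y, S y) -> (exists b, forall y, S y -> le y b) ->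
  exists r, issup S r.
Proof.
move=> hS [y0 hy0] [b hb].
case: (dc_inf_sup hS) => -[[r||] [h1 h2]] _.
- exists r; split.
    by move=> y hy; apply: (h1 y); split.
  by move=> u hu; apply: (h2 (EFin u)) => y [_ hy]; apply: hu.
- by case: (h2 (EFin b)) => y [_ hy]; apply: hb.
- by case: (h1 y0 (conj erefl hy0)).
Qed.

Lemma inf_exists S : D1 S -> (exists y, S y) -> (exists b, forall y, S y -> le b y) ->
  exists r, isinf S r.
Proof.
move=> hS [y0 hy0] [b hb].
case: (dc_inf_sup hS) => _ [[r||] [h1 h2]].
- exists r; split.
    by move=> y hy; apply: (h1 y); split.
  by move=> u hu; apply: (h2 (EFin u)) => y [_ hy]; apply: hu.
- by case: (h1 y0 (conj erefl hy0)).
- by case: (h2 (EFin b)) => y [_ hy]; apply: hb.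
Qed.

Lemma finite_min (L : seq M) t c : lt t c ->
  exists w, lt t w /\ le w c /\ forall p, List.In p L -> lt t p -> le w p.
Proof.
move=> htc; elim: L => [|p L [w [h1 [h2 h3]]]].
  by exists c; split => //; split => //; apply: le_refl.
case: (lt_tri t p) => [hp|hp].
  case: (lt_tri w p) => [hwp|[hwp|hwp]].
  - exists w; split => //; split => // q /= [<-|hq] htq; [by left | by apply: h3].
  - exists w; split => //; split => // q /= [<-|hq] htq; [by right | by apply: h3].
  - exists p; split => //; split; first by apply: le_trans (lt_le hwp) h2.
    move=> q /= [<-|hq] htq; first by apply: le_refl.
    by apply: le_trans (lt_le hwp) (h3 _ hq htq).
exists w; split => //; split => // q /= [<-|hq] htq; last by apply: h3.
by case: hp => [e|hp]; [rewrite e in htq; case: (lt_irr htq) | case: (lt_irr (lt_trans hp htq))].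
Qed.

Lemma right_interval Z t : D1 Z -> isinf Z t -> ~ Z t -> (exists y, Z y) ->
  exists u, lt t u /\ forall x, lt t x -> lt x u -> Z x.
Proof.
move=> hZ [hi1 hi2] hnt _.
case: (loc_omin t hZ) => b [c [hb [hc [ps [ivs hiff]]]]].
case: (finite_min (ps ++ map fst ivs) hc) => w [htw [hwc hwm]].
have [z [hz hzw]] : exists z, Z z /\ lt z w.
  apply: NNPP => hn; apply: (lt_not_le htw); apply: hi2 => y hy.
  by apply: not_lt_le => hyw; apply: hn; exists y.
have htz : lt t z.
  by case: (hi1 _ hz) => // e; rewrite e in hnt.
have hbz : lt b z by apply: lt_trans hb htz.
have hzc : lt z c by apply: lt_le_trans hzw hwc.
case: (proj1 (hiff z hbz hzc) (conj erefl hz)) => [hzp|[uv [huv [h1 h2]]]].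
  have := hwm z; rewrite List.in_app_iff => /(_ (or_introl hzp) htz) hwz.
  by case: (lt_not_le hzw hwz).
have hu1 : le uv.1 t.
  apply: not_lt_le => hlt.
  have := hwm uv.1; rewrite List.in_app_iff List.in_map_iff.
  move=> /(_ (or_intror (ex_intro _ uv (conj erefl huv))) hlt) hw1.
  by case: (lt_irr (lt_trans (lt_le_trans hzw hw1) h1)).
exists z; split => // x htx hxz.
have hbx : lt b x by apply: lt_trans hb htx.
have hxc : lt x c by apply: lt_trans hxz hzc.
have := proj2 (hiff x hbx hxc); case.
  by right; exists uv; split => //; split; [apply: le_lt_trans hu1 htx | apply: lt_trans hxz h2].
by move=> _ /=.
Qed.


Lemma dense_lt x y : lt x y -> exists z, lt x z /\ lt z y.
Proof. by case: HM => _ [h _] _ _ _; apply: h. Qed.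

Lemma half d : lt zero d -> exists eta, lt zero eta /\ le (add eta eta) d.
Proof.
move=> hd; case: (dense_lt hd) => de [h1 h2].
case: (lt_tri (add de de) d) => [h|[h|h]].
- by exists de; split => //; left.
- by exists de; split => //; right.
exists (add d (neg de)); split.
  by rewrite -(addxN de); apply: ltD2r.
have hlt : lt (add d (neg de)) de.
  by move: (ltD2r (neg de) h); rewrite -addA addxN addx0.
left; have := ltD2l (add d (neg de)) hlt.
by rewrite -[X in lt _ X]addA addNx addx0.
Qed.


Lemma D1_Eset dd : D1 (Eset dd).
Proof.
have hT : D1 (fun _ => True) by apply: (Def_ext _ (Def_true HD 1)).
have := @D1_fm (fun _ => True) (EsetF (cst dd) 0 1) hT erefl.
by apply: D1_ext => y; reflexivity.
Qed.

Lemma D1_Rset Z t tc : D1 Z -> D1 (Rset Z t tc).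
Proof.
move=> hZ; have := @D1_fm Z (RsetF (fun i _ => FY D (v i)) (cst t) (cst tc) 0 1) hZ erefl.
by apply: D1_ext => y; reflexivity.
Qed.

Lemma neg_lt0 x : lt zero x -> lt (neg x) zero.
Proof. by move=> h; apply: (@ltD2l_inv x); rewrite addxN addx0. Qed.

Lemma E_facts dd : lt zero dd ->
  (exists e, issup (Eset dd) e) /\ forall e, issup (Eset dd) e -> lt zero e /\ lt e dd.
Proof.
move=> hd; case: (half hd) => eta [he1 he2].
have hEe : Eset dd eta by split => //; exists (add eta eta).
have hb : forall x, Eset dd x -> le x (add dd (neg eta)).
  move=> x [hx [s' [-> hs]]].
  case: (lt_tri x eta) => [hxe|hxe].
    left; apply: lt_le_trans hxe _.
    by have := leD2r (neg eta) he2; rewrite -addA addxN addx0.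
  have hex : le eta x by case: hxe => [->|h]; [right|left].
  have := leD2r (neg eta) (le_trans (leD2l x hex) hs).
  by rewrite -addA addxN addx0.
have hlt : lt (add dd (neg eta)) dd.
  by have := ltD2l dd (neg_lt0 he1); rewrite addx0.
split.
  apply: sup_exists; [exact: D1_Eset | by exists eta | by exists (add dd (neg eta))].
move=> e [h1 h2]; split.
  by apply: lt_le_trans he1 (h1 _ hEe).
by apply: le_lt_trans (h2 _ hb) hlt.
Qed.

Lemma R_facts Z t : D1 Z -> isinf Z t -> ~ Z t -> (exists y, Z y) ->
  (exists r, issup (Rset Z t (add t c0)) r) /\
  forall r, issup (Rset Z t (add t c0)) r -> lt t r /\ forall x, lt t x -> lt x r -> Z x.
Proof.
move=> hZ hinf hnt hne.
case: (right_interval hZ hinf hnt hne) => u [htu hu].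
have htc : lt t (add t c0) by have := ltD2l t c0_pos; rewrite addx0.
have [u' hu'] : exists u', Rset Z t (add t c0) u'.
  case: (lt_tri u (add t c0)) => [h|h].
    by exists u; split => //; split; [left | ].
  exists (add t c0); split => //; split; first by right.
  move=> x h1 h2; apply: hu h1 _.
  by case: h => [e|h]; [rewrite e | apply: lt_trans h2 h].
split.
  apply: sup_exists; [exact: D1_Rset | by exists u' | exists (add t c0)].
  by move=> y [_ [h _]].
move=> r [h1 h2]; split.
  by case: (hu') => h _; apply: lt_le_trans h (h1 _ hu').
move=> x htx hxr; apply: NNPP => hn.
have : le r x.
  apply: h2 => y [hy1 [hy2 hy3]]; apply: not_lt_le => hxy.
  by apply: hn; apply: hy3.
by move/(lt_not_le hxr).
Qed.

Lemma chpos_ok Z : D1 Z -> (exists y, Z y) -> (exists b, forall y, Z y -> le b y) ->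
  [/\ (exists j, chpos Z j), (forall j, chpos Z j -> Z j)
     & (forall j j', chpos Z j -> chpos Z j' -> j = j')].
Proof.
move=> hZ hne hb.
case: (inf_exists hZ hne hb) => t ht.
have key : forall t0 tc r nt dd e, isinf Z t0 -> ~ Z t0 -> tc = add t0 c0 ->
    issup (Rset Z t0 tc) r -> zero = add t0 nt -> dd = add nt r ->
    issup (Eset dd) e -> Z (add t0 e).
  move=> t0 tc r nt dd e hi hn -> hr hnt hdd he.
  case: (R_facts hZ hi hn hne) => _ /(_ r hr) [htr hsub].
  have hnt' : nt = neg t0 by apply: neg_uniq.
  have hd : lt zero dd by rewrite hdd -(addNx t0) hnt'; apply: ltD2l.
  case: (E_facts hd) => _ /(_ e he) [he1 he2].
  apply: hsub; first by have := ltD2l t0 he1; rewrite addx0.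
  by have := ltD2l t0 he2; rewrite hdd hnt' addKr.
split.
- case: (classic (Z t)) => hzt.
    by exists t; exists t; split => //; left.
  case: (R_facts hZ ht hzt hne) => -[r hr] /(_ r hr) [htr _].
  have hd : lt zero (add (neg t) r) by rewrite -(addNx t); apply: ltD2l.
  case: (E_facts hd) => -[e he] _.
  exists (add t e); exists t; split => //; right; split => //.
  exists (add t c0), r; split => //; split => //.
  exists (neg t), (add (neg t) r), e; split; first by rewrite addxN.
  by split.
- move=> j [t0 [hi [[hz ->]|[hn [tc [r [htc [hr [nt [dd [e [h1 [h2 [h3 ->]]]]]]]]]]]]]] //.
  exact: key hi hn htc hr h1 h2 h3.
- move=> j j' [t1 [hi1 H1]] [t2 [hi2 H2]].
  have e12 := isinf_uniq hi1 hi2; subst t2.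
  case: H1 => [[hz1 ->]|[hn1 [tc [r [htc [hr [nt [dd [e [h1 [h2 [h3 ->]]]]]]]]]]]];
  case: H2 => [[hz2 ->]|[hn2 [tc' [r' [htc' [hr' [nt' [dd' [e' [h1' [h2' [h3' ->]]]]]]]]]]]] //.
  subst tc tc'; have er := issup_uniq hr hr'; subst r'.
  have e1 : nt = neg t1 by apply: neg_uniq.
  have e2 : nt' = neg t1 by apply: neg_uniq.
  subst nt nt' dd dd'; by rewrite (issup_uniq h3 h3').
Qed.


Lemma spec1_ok Y : D1 Y -> (exists y, Y y) ->
  [/\ (exists z, spec1 Y z), (forall z, spec1 Y z -> Y z)
     & (forall z z', spec1 Y z -> spec1 Y z' -> z = z')].
Proof.
move=> hY [y0 hy0].
have hP : D1 (fun y => Y y /\ le zero y).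
  by have := @D1_fm Y (Pf 0 1) hY erefl; apply: D1_ext => y; reflexivity.
have hN : D1 (fun w => exists x, zero = add w x /\ Y x).
  by have := @D1_fm Y (Nf 0 1) hY erefl; apply: D1_ext => y; reflexivity.
case: (classic (exists y, Y y /\ le zero y)) => hex.
  have [ex mem uni] := chpos_ok hP hex (ex_intro _ zero (fun y h => proj2 h)).
  split.
  - by case: ex => z hz; exists z; left.
  - by move=> z [[_ /mem []]|[hn _]].
  - by move=> z z' [[_ h]|[hn _]] [[_ h']|[hn' _]] //; apply: uni.
have hNe : exists w, exists x, zero = add w x /\ Y x.
  by exists (neg y0), y0; rewrite addNx.
have hNb : exists b, forall w, (exists x, zero = add w x /\ Y x) -> le b w.
  exists zero => w [x [hwx hx]]; apply: not_lt_le => hw.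
  have hx0 : lt x zero by apply: not_lt_le_inv => hx0; apply: hex; exists x.
  have := ltD2l w hx0; rewrite addx0 -hwx => h; exact: lt_irr (lt_trans h hw).
have [ex mem uni] := chpos_ok hN hNe hNb.
split.
- case: ex => nz hnz; exists (neg nz); right; split => //; exists nz; split => //.
  by rewrite addNx.
- move=> z [[h _]|[_ [nz [hz /mem [x [hx hYx]]]]]]; first by case: hex.
  have -> : z = neg nz by apply: neg_uniqL.
  by rewrite -(neg_uniq (esym hx)).
- move=> z z' [[h _]|[_ [nz [hz hc]]]]; first by case: hex.
  case=> [[h _]|[_ [nz' [hz' hc']]]]; first by case: hex.
  rewrite (neg_uniqL (esym hz)) (neg_uniqL (esym hz')); congr neg; exact: uni.
Qed.


Definition ch1 (Y : M -> Prop) : M := epsilon (inhabits zero) (spec1 Y).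

Lemma ch1_ok Y : D1 Y -> (exists y, Y y) -> Y (ch1 Y) /\ forall z, spec1 Y z <-> z = ch1 Y.
Proof.
move=> hY hne; have [ex mem uni] := spec1_ok hY hne.
have hs : spec1 Y (ch1 Y) by rewrite /ch1; apply: epsilon_spec.
split; first exact: mem.
by move=> z; split => [h|->] //; apply: uni.
Qed.

Lemma ch1_ext Y Y' : (forall y, Y y <-> Y' y) -> ch1 Y = ch1 Y'.
Proof.
move=> h; have -> // : Y = Y'.
by apply: functional_extensionality => y; apply: propositional_extensionality.
Qed.

Definition Ch1G : fm := FAnd (FEx (FY D (v 1))) Spec1F.

Lemma Ch1G_sem Y z : sem Y [:: z] Ch1G <-> (exists y, Y y) /\ spec1 Y z.
Proof. reflexivity. Qed.

Lemma ch1_def k A : Def k.+1 A ->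
  Def k.+1 (fun s => (exists y, A (take k s ++ [:: y])) /\
                     ch1 (fun y => A (take k s ++ [:: y])) = nth zero s k).
Proof.
move=> hA.
have hwf : wf k.+1 (shift k Ch1G) by rewrite -addn1; apply: wf_shift.
have := @fm_def M D HD zero Hsing k A hA _ k.+1 (leqnSn k) hwf.
apply: Def_ext => s hs.
have hsp : size (take k s) = k by rewrite size_take hs ltnSn.
have es : s = take k s ++ [:: nth zero s k].
  by rewrite cats1 -take_nth ?hs // take_oversize ?hs.
have e := sem_shift zero (fun y => A (take k s ++ [:: y])) Ch1G (take k s) [:: nth zero s k].
rewrite -es hsp in e; rewrite e Ch1G_sem.
split; case=> hne h; split => //; have := proj2 (ch1_ok (D1_family hA hsp) hne) (nth zero s k).
  by case=> /(_ h) ->.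
by move=> [_]; apply; rewrite h.
Qed.

Fixpoint chn (n : nat) (Y : seq M -> Prop) : seq M :=
  match n with
  | 0 => [::]
  | n'.+1 => let c := ch1 (fun x => exists t, Y (x :: t)) in
             c :: chn n' (fun t => Y (c :: t))
  end.

Lemma proj_family k n A : D (k + n.+1) A ->
  D k.+1 (fun s => size s = k.+1 /\ exists t, size t = n /\ A (s ++ t)).
Proof.
move=> h; have h' : D (k.+1 + n) A by rewrite addSnnS.
exact: (Def_exk HD (Def_D HD h')).
Qed.

Lemma chn_in n : forall k A p, D (k + n) A -> size p = k -> (exists t, A (p ++ t)) ->
  A (p ++ chn n (fun t => A (p ++ t))).
Proof.
elim: n => [|n IH] k A p hA hp [t ht].
  have := D_size HD hA ht; rewrite size_cat hp => hs.
  have /size0nil h : size t = 0 by lia.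
  by move: ht; rewrite h.
set proj := fun x => exists t, A (p ++ x :: t).
have hD1 : D1 proj.
  have := D1_family (Def_D HD (proj_family hA)) hp.
  apply: D1_ext => y; split.
    by case=> _ [t' [_ h]]; exists t'; move: h; rewrite -catA.
  case=> t' h; split; first by rewrite size_cat hp addn1.
  exists t'; split; last by rewrite -catA.
  have := D_size HD hA h; rewrite size_cat hp /= => hs; lia.
have hne : exists y, proj y.
  case: t ht => [|y t'] ht.
    by have := D_size HD hA ht; rewrite cats0 hp => hs; lia.
  by exists y, t'.
case: (ch1_ok hD1 hne) => [[t' ht'] _] /=.
have hA' : D (k.+1 + n) A by rewrite addSnnS.
have hp' : size (rcons p (ch1 proj)) = k.+1 by rewrite size_rcons hp.
have := IH _ _ _ hA' hp' (ex_intro _ t' _).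
rewrite cat_rcons; have -> // : (fun t => A (rcons p (ch1 proj) ++ t)) = (fun t => A (p ++ ch1 proj :: t)).
  by apply: functional_extensionality => u; rewrite cat_rcons.
by rewrite cat_rcons; apply.
Qed.


Lemma proj_iff k n A p : D (k + n.+1) A -> size p = k -> forall y,
  (size (p ++ [:: y]) = k.+1 /\ exists t, size t = n /\ A ((p ++ [:: y]) ++ t)) <->
  exists t, A (p ++ y :: t).
Proof.
move=> hA hp y; split.
  by case=> _ [t' [_ h]]; exists t'; move: h; rewrite -catA.
case=> t' h; split; first by rewrite size_cat hp addn1.
exists t'; split; last by rewrite -catA.
have := D_size HD hA h; rewrite size_cat hp /= => hs; lia.
Qed.

Lemma chn_def n : forall k A, D (k + n) A ->
  Def (k + n) (fun s => (exists t, A (take k s ++ t)) /\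
                        chn n (fun t => A (take k s ++ t)) = drop k s).
Proof.
elim: n => [|n IH] k A hA.
  apply: (Def_ext _ (Def_D HD hA)) => s hs.
  rewrite take_oversize ?hs ?addn0 // drop_oversize ?hs ?addn0 //; split.
    by move=> h; split => //; exists [::]; rewrite cats0.
  case=> -[t ht] _; have := D_size HD hA ht; rewrite size_cat hs => hs'.
  have /size0nil e : size t = 0 by lia.
  by move: ht; rewrite e cats0.
have hA' := proj_family hA.
have H1 := Def_back HD n (ch1_def (Def_D HD hA')).
have hA2 : D (k.+1 + n) A by rewrite addSnnS.
have H2 := IH _ _ hA2.
have H := Def_and HD H1 H2; rewrite addSnnS in H.
apply: (Def_ext _ H) => s hs.
have hk : k < size s by rewrite hs; lia.
set p := take k s; set z := nth zero s k.
have hp : size p = k by rewrite size_take hk.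
have e1 : take k.+1 s = rcons p z by rewrite (take_nth zero).
have e2 : take k (take k.+1 s) = p by rewrite take_takel.
have e3 : nth zero (take k.+1 s) k = z by rewrite nth_take.
have e4 : drop k s = z :: drop k.+1 s by rewrite (drop_nth zero).
rewrite e2 e3 e1 e4 (ch1_ext (proj_iff hA hp)) /=.
set c := ch1 _.
have ef : (fun t => A (rcons p z ++ t)) = (fun t => A (p ++ z :: t)).
  by apply: functional_extensionality => u; rewrite cat_rcons.
rewrite ef; split.
  case=> -[[y hy] hc] [_ hn]; split.
    by case/(proj_iff hA hp): hy => t ht; exists (y :: t).
  by rewrite hc hn.
case=> -[t ht] [hc hn].
have hne : exists y, exists t, A (p ++ y :: t).
  case: t ht => [|y t] ht; last by exists y, t.
  by have := D_size HD hA ht; rewrite cats0 hp => hs'; lia.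
have hD1 : D1 (fun y => exists t, A (p ++ y :: t)).
  by have := D1_family (Def_D HD hA') hp; apply: D1_ext; apply: proj_iff.
case: (ch1_ok hD1 hne) => hcin _.
split; split.
- by case: hne => y hy; exists y; apply/(proj_iff hA hp).
- by rewrite hc.
- by rewrite -hc; case: hcin => t' h; exists t'.
- by rewrite -hc.
Qed.


Lemma map_argv_iota (s : seq M) i l : i + l <= size s ->
  map (argv zero s) (map inl (iota i l)) = take l (drop i s).
Proof.
move=> h; rewrite -map_comp; apply: (map_nth_iota zero); lia.
Qed.

Lemma all_arg_iota n i l : i + l <= n -> all (arg_ok (M:=M) n) (map inl (iota i l)).
Proof.
move=> h; rewrite all_map; apply/allP => j; rewrite mem_iota /= => /andP [_ hj]; lia.
Qed.

Lemma cat_inj (u u' w w' : seq M) : size u = size u' -> u ++ w = u' ++ w' -> u = u' /\ w = w'.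
Proof.
move=> hs he; split.
  by have := congr1 (take (size u)) he; rewrite take_size_cat // hs take_size_cat.
by have := congr1 (drop (size u)) he; rewrite drop_size_cat // hs drop_size_cat.
Qed.

Lemma drop_cat_le n (s1 s2 : seq M) : n <= size s1 -> drop n (s1 ++ s2) = drop n s1 ++ s2.
Proof.
move=> h; rewrite drop_cat; case: ltnP => h' //.
have e : n = size s1 by lia.
by rewrite e subnn drop0 drop_size.
Qed.

Lemma dt_size (T : dtop D) x : dt_set T x -> size x = dt_dim T.
Proof. by move=> h; apply: (D_size HD (dt_set_def T) h). Qed.

Lemma base_size (T : dtop D) s : dt_base T s -> size s = dt_pdim T + dt_dim T.
Proof. by move=> h; apply: (D_size HD (dt_base_def T) h). Qed.

Lemma take_drop_size (s : seq M) k : s = take k s ++ drop k s.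
Proof. by rewrite cat_take_drop. Qed.


Lemma Def_exlead m n A : D (m + n) A -> Def n (fun s => exists u, size u = m /\ A (u ++ s)).
Proof.
move=> hA.
have h1 : size (map (@inl nat M) (iota n m ++ iota 0 n)) = m + n by rewrite size_map size_cat !size_iota.
have h2 : all (arg_ok (n + m)) (map (@inl nat M) (iota n m ++ iota 0 n)).
  by rewrite map_cat all_cat !all_arg_iota //; lia.
have := Def_exk HD (Def_atom HD zero Hsing (Def_D HD hA) h1 h2).
apply: Def_ext => s hs; split; case=> u [hu h]; exists u; split => //; move: h.
  rewrite !map_cat !map_argv_iota ?size_cat ?hs ?hu; try lia.
  by rewrite drop0 (drop_size_cat _ hs) take_size_cat // take_oversize ?hu.
rewrite !map_cat !map_argv_iota ?size_cat ?hs ?hu; try lia.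
by rewrite drop0 (drop_size_cat _ hs) take_size_cat // take_oversize ?hu.
Qed.

Lemma map_argv_iota2 (s : seq M) i l j m : i + l <= size s -> j + m <= size s ->
  map (argv zero s) (map (@inl nat M) (iota i l ++ iota j m)) = take l (drop i s) ++ take m (drop j s).
Proof. by move=> h1 h2; rewrite !map_cat map_argv_iota // map_argv_iota. Qed.


Lemma Def_D' n P : Def n P -> (forall s, P s -> size s = n) -> D n P.
Proof.
move=> h hs; apply: (@D_ext M D n _ P _ h) => s; split; [by case | by move=> hp; split => //; apply: hs].
Qed.

Variables (G X : dtop D) (mulG : seq M -> seq M -> seq M) (invG : seq M -> seq M)
  (eG : seq M) (a : seq M -> seq M -> seq M).
Hypothesis HG : is_dtgroup G mulG invG eG.
Hypothesis Ha : is_daction G mulG eG X a.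

Notation Gs := (dt_set G).
Notation Xs := (dt_set X).
Notation dG := (dt_dim G).
Notation dX := (dt_dim X).

Lemma Ha1 : dcmap2 G X X a. Proof. by case: Ha. Qed.
Lemma G_e : Gs eG. Proof. by case: HG. Qed.
Lemma G_mul g h : Gs g -> Gs h -> Gs (mulG g h).
Proof. by case: HG => _ _ _ _ [[[hm _] _] _]; apply: hm. Qed.
Lemma G_inv g : Gs g -> Gs (invG g).
Proof. by case: HG => _ _ _ _ [_ [hm _]]; apply: hm. Qed.
Lemma G_mulV g : Gs g -> mulG (invG g) g = eG.
Proof. by move=> hg; case: HG => _ _ _ h _; case: (h g hg). Qed.
Lemma a_in g x : Gs g -> Xs x -> Xs (a g x).
Proof. by move=> hg hx; case: Ha1 => -[h _] _; apply: h. Qed.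
Lemma a_e x : Xs x -> a eG x = x.
Proof. by case: Ha => _ h _; apply: h. Qed.
Lemma a_comp g h x : Gs g -> Gs h -> Xs x -> a g (a h x) = a (mulG g h) x.
Proof. by case: Ha => _ _ h'; apply: h'. Qed.
Lemma Ga_def : D (dG + (dX + dX))
  (fun p => exists x1 x2, Gs x1 /\ Xs x2 /\ p = x1 ++ x2 ++ a x1 x2).
Proof. by case: Ha1 => -[_ h] _; rewrite addnA. Qed.

Definition Orb x y := exists g, Gs g /\ y = a g x.

Lemma Orb_refl x : Xs x -> Orb x x.
Proof. by move=> h; exists eG; split; [apply: G_e | rewrite a_e]. Qed.
Lemma Orb_in x y : Xs x -> Orb x y -> Xs y.
Proof. by move=> hx [g [hg ->]]; apply: a_in. Qed.
Lemma Orb_sym x y : Xs x -> Orb x y -> Orb y x.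
Proof.
move=> hx [g [hg ->]]; exists (invG g); split; first exact: G_inv.
rewrite a_comp; [|exact: G_inv|done|done]; by rewrite G_mulV // a_e.
Qed.
Lemma Orb_trans x y z : Xs x -> Orb x y -> Orb y z -> Orb x z.
Proof.
move=> hx [g [hg ->]] [h [hh ->]]; exists (mulG h g); split; first exact: G_mul.
by rewrite a_comp.
Qed.

Definition Aorb s := size s = dX + dX /\ exists g, size g = dG /\
  exists x1 x2, Gs x1 /\ Xs x2 /\ g ++ s = x1 ++ x2 ++ a x1 x2.

Lemma Aorb_D : D (dX + dX) Aorb.
Proof. exact: (Def_exlead Ga_def). Qed.

Lemma Aorb_iff x y : size x = dX -> (Aorb (x ++ y) <-> Xs x /\ Orb x y).
Proof.
move=> hx; split.
  case=> _ [g [hg [x1 [x2 [h1 [h2 he]]]]]].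
  have [_ e] := cat_inj (etrans hg (esym (dt_size h1))) he.
  have [e1 e2] := cat_inj (etrans hx (esym (dt_size h2))) e.
  by subst; split => //; exists x1.
case=> hxs [g [hg ->]]; split; first by rewrite size_cat hx (dt_size (a_in hg hxs)).
by exists g; split; [apply: dt_size | exists g, x].
Qed.

Definition pi x := chn dX (fun y => Aorb (x ++ y)).

Lemma pi_orb x : Xs x -> Orb x (pi x).
Proof.
move=> hx; have hs := dt_size hx.
have := @chn_in dX dX Aorb x Aorb_D hs (ex_intro _ x _).
move=> /(_ (proj2 (Aorb_iff x hs) (conj hx (Orb_refl hx)))).
by case/(Aorb_iff _ hs).
Qed.

Lemma pi_in x : Xs x -> Xs (pi x).
Proof. by move=> hx; apply: Orb_in hx (pi_orb hx). Qed.

Lemma pi_eq x x' : Xs x -> Xs x' -> (pi x = pi x' <-> Orb x x').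
Proof.
move=> hx hx'; split.
  move=> e; apply: Orb_trans hx (pi_orb hx) _.
  by rewrite e; apply: Orb_sym hx' (pi_orb hx').
move=> ho; rewrite /pi; congr chn.
apply: functional_extensionality => y; apply: propositional_extensionality.
rewrite (Aorb_iff _ (dt_size hx)) (Aorb_iff _ (dt_size hx')); split; case=> _ h; split => //.
  by apply: Orb_trans hx' (Orb_sym hx ho) h.
by apply: Orb_trans hx ho h.
Qed.

Lemma pi_inv g x : Gs g -> Xs x -> pi (a g x) = pi x.
Proof.
move=> hg hx; apply/(pi_eq (a_in hg hx) hx); apply: (Orb_sym hx).
by exists g.
Qed.

Lemma Gpi_def : D (dX + dX) (fun s => exists x, Xs x /\ s = x ++ pi x).
Proof.
apply: Def_D'; last first.
  by move=> s [x [hx ->]]; rewrite size_cat (dt_size hx) (dt_size (pi_in hx)).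
apply: (Def_ext _ (chn_def Aorb_D)) => s hs.
have hsx : size (take dX s) = dX by rewrite size_take hs; case: ifP => //; lia.
split.
  case=> -[t /(Aorb_iff _ hsx) [hx _]] hc; exists (take dX s); split => //.
  by rewrite -{1}(cat_take_drop dX s) -hc.
case=> x [hx ->]; have hsz := dt_size hx.
rewrite take_size_cat // drop_size_cat //; split => //.
by exists x; apply/(Aorb_iff _ hsz); split => //; apply: Orb_refl.
Qed.


Notation pX := (dt_pdim X).
Notation bX := (dt_base X).

Definition Qset q := exists x, Xs x /\ q = pi x.

Lemma Qset_D : D dX Qset.
Proof.
apply: Def_D'; last by move=> q [x [hx ->]]; apply: dt_size; apply: pi_in.
apply: (Def_ext _ (Def_exlead Gpi_def)) => q hq; split.
  case=> u [hu [x [hx he]]]; exists x; split => //.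
  by have [_ ->] := cat_inj (etrans hu (esym (dt_size hx))) he.
by case=> x [hx ->]; exists x; split; [apply: dt_size | exists x].
Qed.

Definition Qbase s := exists y x, size y = pX /\ bX (y ++ x) /\ s = y ++ pi x.

Lemma Qbase_iff y q : size y = pX -> (Qbase (y ++ q) <-> exists x, bX (y ++ x) /\ q = pi x).
Proof.
move=> hy; split.
  case=> y' [x [hy' [hb he]]]; exists x.
  by have [e1 e2] := cat_inj (etrans hy (esym hy')) he; subst y'.
by case=> x [hb ->]; exists y, x.
Qed.

Lemma bX_in y x : size y = pX -> bX (y ++ x) -> Xs x.
Proof. by move=> hy hb; apply: (dt_base_sub hy hb). Qed.

Lemma Qbase_D : D (pX + dX) Qbase.
Proof.
apply: Def_D'; last first.
  move=> s [y [x [hy [hb ->]]]]; rewrite size_cat hy (dt_size (pi_in (bX_in hy hb))) //.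
set n := pX + dX.
have a1 : size (map (@inl nat M) (iota 0 pX ++ iota n dX)) = pX + dX.
  by rewrite size_map size_cat !size_iota.
have a2 : all (arg_ok (n + dX)) (map (@inl nat M) (iota 0 pX ++ iota n dX)).
  by rewrite map_cat all_cat !all_arg_iota //; lia.
have b1 : size (map (@inl nat M) (iota n dX ++ iota pX dX)) = dX + dX.
  by rewrite size_map size_cat !size_iota.
have b2 : all (arg_ok (n + dX)) (map (@inl nat M) (iota n dX ++ iota pX dX)).
  by rewrite map_cat all_cat !all_arg_iota //; lia.
have H := Def_exk HD (Def_and HD (Def_atom HD zero Hsing (Def_D HD (dt_base_def X)) a1 a2)
                                 (Def_atom HD zero Hsing (Def_D HD Gpi_def) b1 b2)).
apply: (Def_ext _ H) => s hs.
have e1 : forall w, size w = dX -> map (argv zero (s ++ w)) (map inl (iota 0 pX ++ iota n dX)) = take pX s ++ w.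
  move=> w hw; rewrite map_argv_iota2 ?size_cat ?hs ?hw; try lia.
  rewrite drop0 takel_cat ?hs; last lia.
  by rewrite drop_size_cat // [take dX w]take_oversize ?hw.
have e2 : forall w, size w = dX -> map (argv zero (s ++ w)) (map inl (iota n dX ++ iota pX dX)) = w ++ drop pX s.
  move=> w hw; rewrite map_argv_iota2 ?size_cat ?hs ?hw; try lia.
  rewrite drop_size_cat // take_oversize ?hw //.
  rewrite drop_cat_le ?hs; last lia.
  by rewrite take_size_cat // size_drop hs; lia.
have hsy : size (take pX s) = pX by rewrite size_take hs; case: ifP => //; lia.
split.
  case=> w [hw []]; rewrite e1 // e2 // => hb [x [hx he]].
  have [ew ed] := cat_inj (etrans hw (esym (dt_size hx))) he; subst w.
  by exists (take pX s), x; split => //; split => //; rewrite -ed cat_take_drop.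
case=> y [x [hy [hb es]]]; exists x.
have hsx := dt_size (bX_in hy hb).
split => //; rewrite e1 // e2 // es take_size_cat // drop_size_cat //.
by split => //; exists x; split => //; apply: bX_in hb.
Qed.

Lemma Q_sub y q : size y = pX -> Qbase (y ++ q) -> Qset q.
Proof. by move=> hy /(Qbase_iff _ hy) [x [hb ->]]; exists x; split => //; apply: bX_in hb. Qed.

Lemma Q_cover q : Qset q -> exists y, size y = pX /\ Qbase (y ++ q).
Proof.
case=> x [hx ->]; case: (dt_cover hx) => y [hy hb]; exists y; split => //.
by apply/(Qbase_iff _ hy); exists x.
Qed.

Lemma base_open (T : dtop D) y : size y = dt_pdim T -> dopen T (fun z => dt_base T (y ++ z)).
Proof.
move=> hy; split; first by move=> z; apply: dt_base_sub.
move=> z hz; case: (dt_inter hy hy hz hz) => y3 [h1 [h2 h3]].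
by exists y3; split => //; split => // w /h3 [].
Qed.

Lemma trans_open g U : Gs g -> dopen X U -> dopen X (fun w => Xs w /\ U (a g w)).
Proof.
move=> hg hU; split; first by move=> w [].
move=> w [hw hu]; case: Ha1 => _ [_ hc]; case: (hc U hU) => _ /(_ g w (conj hg (conj hw hu))).
case=> U1 [U2 [_ [[_ hU2] [h1 [h2 h3]]]]].
case: (hU2 w h2) => y [hy [hb hyz]]; exists y; split => //; split => // z /hyz hz.
by case: (h3 g z h1 hz) => _ [].
Qed.

Lemma Q_inter y1 y2 q : size y1 = pX -> size y2 = pX -> Qbase (y1 ++ q) -> Qbase (y2 ++ q) ->
  exists y3, size y3 = pX /\ Qbase (y3 ++ q) /\
    forall z, Qbase (y3 ++ z) -> Qbase (y1 ++ z) /\ Qbase (y2 ++ z).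
Proof.
move=> hy1 hy2 /(Qbase_iff _ hy1) [x1 [hb1 ->]] /(Qbase_iff _ hy2) [x2 [hb2 e]].
have hx1 := bX_in hy1 hb1; have hx2 := bX_in hy2 hb2.
case/(pi_eq hx1 hx2): e => g [hg ex2]; subst x2.
have hW := trans_open hg (base_open hy2).
case: (proj2 hW x1 (conj hx1 hb2)) => y4 [hy4 [hb4 h4]].
case: (dt_inter hy1 hy4 hb1 hb4) => y3 [hy3 [hb3 h3]].
exists y3; split => //; split; first by apply/(Qbase_iff _ hy3); exists x1.
move=> z /(Qbase_iff _ hy3) [w [hbw ->]]; case: (h3 w hbw) => hw1 /h4 [hw hw2].
split; first by apply/(Qbase_iff _ hy1); exists w.
by apply/(Qbase_iff _ hy2); exists (a g w); split => //; rewrite pi_inv.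
Qed.

Definition Q : dtop D := DTop Qset_D Qbase_D Q_sub Q_cover Q_inter.


Lemma dopen_ext (T : dtop D) (U V : mset M) : (forall x, U x <-> V x) -> dopen T U -> dopen T V.
Proof.
move=> h [h1 h2]; split; first by move=> x hx; apply: h1; apply/(h x).
move=> x hx; case: (h2 x (proj2 (h x) hx)) => y [hy [hb hz]]; exists y; split => //; split => // z /hz hu; exact: (proj1 (h z) hu).
Qed.

Lemma pi_maps : maps_into X Q pi.
Proof. by move=> x hx; exists x. Qed.

Lemma pi_open U : dopen X U -> dopen Q (fun q => exists x, U x /\ q = pi x).
Proof.
case=> hU1 hU2; split; first by move=> q [x [hx ->]]; exists x; split => //; apply: hU1.
move=> q [x [hx ->]]; case: (hU2 x hx) => y [hy [hb hz]].
exists y; split => //; split; first by apply/(Qbase_iff _ hy); exists x.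
by move=> z /(Qbase_iff _ hy) [w [hw ->]]; exists w; split => //; apply: hz.
Qed.

Lemma pi_cont : continuous_map X Q pi.
Proof.
split; first exact: pi_maps.
move=> U [hU1 hU2]; split; first by move=> x [].
move=> x [hx hu]; case: (hU2 _ hu) => y [hy [/(Qbase_iff _ hy) [x' [hb' e]] hz]].
have hx' := bX_in hy hb'.
case/(pi_eq hx hx'): (e) => g [hg ex']; subst x'.
have hW := trans_open hg (@base_open X y hy).
case: (proj2 hW x (conj hx hb')) => y4 [hy4 [hb4 h4]].
exists y4; split => //; split => // w /h4 [hw hbw]; split => //.
by apply: hz; apply/(Qbase_iff _ hy); exists (a g w); split => //; rewrite pi_inv.
Qed.

Lemma pi_dcmap : dcmap X Q pi.
Proof. by split; [split; [exact: pi_maps | exact: Gpi_def] | exact: pi_cont]. Qed.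

Definition sec q := epsilon (inhabits [::]) (fun x => Xs x /\ pi x = q).

Lemma sec_spec q : Qset q -> Xs (sec q) /\ pi (sec q) = q.
Proof.
case=> x [hx ->]; apply: (@epsilon_spec _ (inhabits [::]) (fun x' => Xs x' /\ pi x' = pi x)).
by exists x.
Qed.

Lemma universal (T : dtop D) (phi : seq M -> seq M) : dcmap X T phi ->
  (forall g x, Gs g -> Xs x -> phi (a g x) = phi x) ->
  exists psi, dcmap Q T psi /\ forall x, Xs x -> phi x = psi (pi x).
Proof.
move=> [[hmap hgraph] [_ hcont]] hinv.
pose psi q := phi (sec q).
have key : forall x, Xs x -> psi (pi x) = phi x.
  move=> x hx; have [hs e] := sec_spec (pi_maps hx).
  case/(pi_eq hs hx): e => g [hg ex]; rewrite /psi {2}ex hinv //.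
have hpsi : maps_into Q T psi.
  by move=> q /sec_spec [hs _]; apply: hmap.
exists psi; split; last by move=> x hx; rewrite key.
split; last first.
  split => // U hU.
  have hV := hcont U hU; have := pi_open hV; apply: dopen_ext => q; split.
    by case=> x [[hx hu] ->]; split; [apply: pi_maps | rewrite key].
  case=> hq hu; case: (sec_spec hq) => hs e; exists (sec q); split => //.
split => //.
apply: Def_D'; last first.
  move=> p [q [hq ->]]; rewrite size_cat (dt_size (hpsi _ hq)); case: hq => x [hx ->].
  by rewrite (dt_size (pi_in hx)).
set dT := dt_dim T; set n := dX + dT.
have a1 : size (map (@inl nat M) (iota n dX ++ iota 0 dX)) = dX + dX.
  by rewrite size_map size_cat !size_iota.
have a2 : all (arg_ok (n + dX)) (map (@inl nat M) (iota n dX ++ iota 0 dX)).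
  by rewrite map_cat all_cat !all_arg_iota //; lia.
have b1 : size (map (@inl nat M) (iota n dX ++ iota dX dT)) = dX + dT.
  by rewrite size_map size_cat !size_iota.
have b2 : all (arg_ok (n + dX)) (map (@inl nat M) (iota n dX ++ iota dX dT)).
  by rewrite map_cat all_cat !all_arg_iota //; lia.
have H := Def_exk HD (Def_and HD (Def_atom HD zero Hsing (Def_D HD Gpi_def) a1 a2)
                                 (Def_atom HD zero Hsing (Def_D HD hgraph) b1 b2)).
apply: (Def_ext _ H) => p hp.
have e1 : forall w, size w = dX -> map (argv zero (p ++ w)) (map inl (iota n dX ++ iota 0 dX)) = w ++ take dX p.
  move=> w hw; rewrite map_argv_iota2 ?size_cat ?hp ?hw; try lia.
  by rewrite drop_size_cat // [take dX w]take_oversize ?hw // drop0 takel_cat // hp; lia.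
have e2 : forall w, size w = dX -> map (argv zero (p ++ w)) (map inl (iota n dX ++ iota dX dT)) = w ++ drop dX p.
  move=> w hw; rewrite map_argv_iota2 ?size_cat ?hp ?hw; try lia.
  rewrite drop_size_cat // [take dX w]take_oversize ?hw // drop_cat_le ?hp; last lia.
  by rewrite take_size_cat // size_drop hp; lia.
split.
  case=> w [hw []]; rewrite e1 // e2 // => -[x1 [hx1 he1]] [x2 [hx2 he2]].
  have [ew1 et] := cat_inj (etrans hw (esym (dt_size hx1))) he1.
  have [ew2 ed] := cat_inj (etrans hw (esym (dt_size hx2))) he2.
  subst x1 x2; exists (pi w); split; first exact: pi_maps.
  by rewrite key // -et -ed cat_take_drop.
case=> q [hq ep]; case: (hq) => x [hx eq]; subst q.
have hsx := dt_size hx; have hspi := dt_size (pi_in hx).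
exists x; split => //; rewrite e1 // e2 // ep take_size_cat // drop_size_cat // key //.
by split; exists x.
Qed.

Lemma part1 : is_dquotient G X a Q pi.
Proof.
split; [exact: pi_dcmap | | exact: universal].
by move=> g x hg hx; apply: pi_inv.
Qed.


Lemma blk_l (p w : seq M) i l : i + l <= size p -> take l (drop i (p ++ w)) = take l (drop i p).
Proof.
move=> h; rewrite drop_cat_le; last lia.
by rewrite takel_cat // size_drop; lia.
Qed.

Lemma blk_r (p w : seq M) i l : size p <= i -> take l (drop i (p ++ w)) = take l (drop (i - size p) w).
Proof. by move=> h; rewrite drop_cat; case: ltnP => // h'; lia. Qed.

Lemma blk3 n (u v r : seq M) : size u = n -> size v = n -> size r = n ->
  [/\ take n (drop 0 (u ++ v ++ r)) = u, take n (drop n (u ++ v ++ r)) = v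
    & take n (drop (n + n) (u ++ v ++ r)) = r].
Proof.
move=> hu hv hr; split.
- by rewrite drop0 take_size_cat.
- by rewrite drop_size_cat // take_size_cat.
- by rewrite catA drop_size_cat ?size_cat ?hu ?hv // take_oversize ?hr.
Qed.

Lemma split3 n (p : seq M) : size p = n + n + n ->
  p = take n (drop 0 p) ++ take n (drop n p) ++ take n (drop (n + n) p).
Proof.
move=> h; rewrite drop0 [take n (drop (n + n) p)]take_oversize ?size_drop ?h; last lia.
rewrite -drop_drop.
by rewrite !cat_take_drop.
Qed.


Variables (mulX : seq M -> seq M -> seq M) (invX : seq M -> seq M) (eX : seq M).
Hypothesis HX : is_dtgroup X mulX invX eX.
Hypothesis hGX : forall g, Gs g -> Xs g.
Hypothesis hmul : forall g h, Gs g -> Gs h -> mulG g h = mulX g h.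
Hypothesis hnorm : forall x g, Xs x -> Gs g -> Gs (mulX (mulX x g) (invX x)).
Hypothesis hact : forall g x, Gs g -> Xs x -> a g x = mulX g x.

Lemma X_e : Xs eX. Proof. by case: HX. Qed.
Lemma X_mul x y : Xs x -> Xs y -> Xs (mulX x y).
Proof. by case: HX => _ _ _ _ [[[hm _] _] _]; apply: hm. Qed.
Lemma X_inv x : Xs x -> Xs (invX x).
Proof. by case: HX => _ _ _ _ [_ [hm _]]; apply: hm. Qed.
Lemma mA x y z : Xs x -> Xs y -> Xs z -> mulX x (mulX y z) = mulX (mulX x y) z.
Proof. by case: HX => _ h _ _ _; apply: h. Qed.
Lemma m1l x : Xs x -> mulX eX x = x.
Proof. by move=> hx; case: HX => _ _ h _ _; case: (h x hx). Qed.
Lemma m1r x : Xs x -> mulX x eX = x.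
Proof. by move=> hx; case: HX => _ _ h _ _; case: (h x hx). Qed.
Lemma mV x : Xs x -> mulX x (invX x) = eX.
Proof. by move=> hx; case: HX => _ _ _ h _; case: (h x hx). Qed.
Lemma mVl x : Xs x -> mulX (invX x) x = eX.
Proof. by move=> hx; case: HX => _ _ _ h _; case: (h x hx). Qed.

Lemma mcancel x y z : Xs x -> Xs y -> Xs z -> mulX x y = mulX x z -> y = z.
Proof.
move=> hx hy hz e.
have : mulX (invX x) (mulX x y) = mulX (invX x) (mulX x z) by rewrite e.
by rewrite (mA (X_inv hx) hx hy) (mA (X_inv hx) hx hz) mVl // m1l // m1l.
Qed.

Lemma inv_uniq x y : Xs x -> Xs y -> mulX x y = eX -> y = invX x.
Proof. by move=> hx hy e; apply: (mcancel hx hy (X_inv hx)); rewrite e mV. Qed.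

Lemma eGX : eG = eX.
Proof.
have hg := hGX G_e.
apply: (mcancel hg hg X_e); rewrite (m1r hg) -(hmul G_e G_e).
by case: HG => _ _ h _ _; case: (h eG G_e).
Qed.

Lemma invGX g : Gs g -> invG g = invX g.
Proof.
move=> hg; apply: inv_uniq; [exact: hGX | exact: hGX (G_inv hg) |].
rewrite -(hmul hg (G_inv hg)) -eGX.
by case: HG => _ _ _ h _; case: (h g hg).
Qed.

Lemma orbX x y : Xs x -> (Orb x y <-> exists g, Gs g /\ y = mulX g x).
Proof.
by move=> hx; split; case=> g [hg ->]; exists g; split => //; rewrite hact.
Qed.

Lemma compat_mul x y g h : Xs x -> Xs y -> Gs g -> Gs h ->
  mulX (mulX g x) (mulX h y) = mulX (mulG g (mulX (mulX x h) (invX x))) (mulX x y).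
Proof.
move=> hx hy hg hh.
have hh' := hnorm hx hh.
have gX := hGX hg; have hX := hGX hh; have hX' := hGX hh'.
rewrite hmul //.
rewrite -(mA gX hX' (X_mul hx hy)); rewrite -(mA gX hx (X_mul hX hy)); congr (mulX g).
rewrite -(mA (X_mul hx hX) (X_inv hx) (X_mul hx hy)).
rewrite (mA (X_inv hx) hx hy) (mVl hx) (m1l hy).
by rewrite (mA hx hX hy).
Qed.

Lemma orb_mul x y x' y' : Xs x -> Xs y -> Orb x x' -> Orb y y' -> Orb (mulX x y) (mulX x' y').
Proof.
move=> hx hy /(orbX _ hx) [g [hg ->]] /(orbX _ hy) [h [hh ->]].
apply/(orbX _ (X_mul hx hy)); exists (mulG g (mulX (mulX x h) (invX x))); split.
  by apply: G_mul => //; apply: hnorm.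
exact: compat_mul.
Qed.

Lemma inv_mul x y : Xs x -> Xs y -> invX (mulX x y) = mulX (invX y) (invX x).
Proof.
move=> hx hy; apply: esym; apply: inv_uniq; [exact: X_mul | apply: X_mul; exact: X_inv |].
rewrite -(mA hx hy (X_mul (X_inv hy) (X_inv hx))) (mA hy (X_inv hy) (X_inv hx)) (mV hy).
by rewrite (m1l (X_inv hx)) (mV hx).
Qed.

Lemma inv_inv x : Xs x -> invX (invX x) = x.
Proof. by move=> hx; apply: esym; apply: inv_uniq; [exact: X_inv | done | exact: mVl]. Qed.

Lemma orb_inv x x' : Xs x -> Orb x x' -> Orb (invX x) (invX x').
Proof.
move=> hx /(orbX _ hx) [g [hg ->]].
have gX := hGX hg; have hxi := X_inv hx; have hgi : Gs (invX g) by rewrite -invGX //; apply: G_inv.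
apply/(orbX _ hxi); exists (mulX (mulX (invX x) (invX g)) (invX (invX x))); split.
  by apply: hnorm.
rewrite inv_mul // inv_inv // -(mA (X_mul hxi (X_inv gX)) hx hxi) mV // m1r //.
by apply: X_mul => //; apply: X_inv.
Qed.


Definition mulQ q1 q2 := pi (mulX (sec q1) (sec q2)).
Definition invQ q := pi (invX (sec q)).
Definition eQ := pi eX.

Lemma sec_orb x : Xs x -> Xs (sec (pi x)) /\ Orb x (sec (pi x)).
Proof.
move=> hx; case: (sec_spec (pi_maps hx)) => hs e; split => //.
by apply/(pi_eq hx hs).
Qed.

Lemma mulQ_pi x y : Xs x -> Xs y -> mulQ (pi x) (pi y) = pi (mulX x y).
Proof.
move=> hx hy; case: (sec_orb hx) => hs1 o1; case: (sec_orb hy) => hs2 o2.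
apply: esym; apply/(pi_eq (X_mul hx hy) (X_mul hs1 hs2)); exact: orb_mul.
Qed.

Lemma invQ_pi x : Xs x -> invQ (pi x) = pi (invX x).
Proof.
move=> hx; case: (sec_orb hx) => hs o.
apply: esym; apply/(pi_eq (X_inv hx) (X_inv hs)); exact: orb_inv.
Qed.

Lemma GmX_def : D (dX + dX + dX)
  (fun p => exists x1 x2, Xs x1 /\ Xs x2 /\ p = x1 ++ x2 ++ mulX x1 x2).
Proof. by case: HX => _ _ _ _ [[[_ h] _] _]. Qed.

Lemma blk_r' (p w : seq M) N i l : size p = N -> take l (drop (N + i) (p ++ w)) = take l (drop i w).
Proof. by move=> h; rewrite blk_r ?h ?leq_addr // addKn. Qed.

Lemma mulQ_graph : D (dX + dX + dX)
  (fun p => exists q1 q2, Qset q1 /\ Qset q2 /\ p = q1 ++ q2 ++ mulQ q1 q2).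
Proof.
apply: Def_D'; last first.
  move=> p [q1 [q2 [[x1 [h1 ->]] [[x2 [h2 ->]] ->]]]]; rewrite mulQ_pi //.
  by rewrite !size_cat !(dt_size (pi_in _)) ?addnA //; apply: X_mul.
set N := dX + dX + dX.
have a1 : size (map (@inl nat M) (iota N N)) = N by rewrite size_map size_iota.
have a2 : all (arg_ok (N + N)) (map (@inl nat M) (iota N N)) by rewrite all_arg_iota.
have gsz : forall i j, size (map (@inl nat M) (iota i dX ++ iota j dX)) = dX + dX.
  by move=> i j; rewrite size_map size_cat !size_iota.
have gok : forall i j, i + dX <= N + N -> j + dX <= N + N ->
    all (arg_ok (N + N)) (map (@inl nat M) (iota i dX ++ iota j dX)).
  by move=> i j hi hj; rewrite map_cat all_cat !all_arg_iota.
have Gp := Def_D HD Gpi_def.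
have o1 : all (arg_ok (N + N)) (map (@inl nat M) (iota N dX ++ iota 0 dX)).
  by apply: gok; rewrite /N; lia.
have o2 : all (arg_ok (N + N)) (map (@inl nat M) (iota (N + dX) dX ++ iota dX dX)).
  by apply: gok; rewrite /N; lia.
have o3 : all (arg_ok (N + N)) (map (@inl nat M) (iota (N + (dX + dX)) dX ++ iota (dX + dX) dX)).
  by apply: gok; rewrite /N; lia.
have H := Def_exk HD (Def_and HD (Def_atom HD zero Hsing (Def_D HD GmX_def) a1 a2)
  (Def_and HD (Def_atom HD zero Hsing Gp (gsz N 0) o1)
  (Def_and HD (Def_atom HD zero Hsing Gp (gsz (N + dX) dX) o2)
              (Def_atom HD zero Hsing Gp (gsz (N + (dX + dX)) (dX + dX)) o3)))).
apply: (Def_ext _ H) => p hp.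
have E : forall w, size w = N -> [/\
   map (argv zero (p ++ w)) (map inl (iota N N)) = w,
   map (argv zero (p ++ w)) (map inl (iota N dX ++ iota 0 dX)) = take dX (drop 0 w) ++ take dX (drop 0 p),
   map (argv zero (p ++ w)) (map inl (iota (N + dX) dX ++ iota dX dX)) = take dX (drop dX w) ++ take dX (drop dX p)
 & map (argv zero (p ++ w)) (map inl (iota (N + (dX + dX)) dX ++ iota (dX + dX) dX)) =
     take dX (drop (dX + dX) w) ++ take dX (drop (dX + dX) p)].
  move=> w hw; split.
  - by rewrite map_argv_iota ?size_cat ?hp ?hw // drop_size_cat // take_oversize ?hw.
  - rewrite map_argv_iota2 ?size_cat ?hp ?hw; try (rewrite /N; lia).
    rewrite drop_size_cat // !drop0 takel_cat // hp /N; lia.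
  - rewrite map_argv_iota2 ?size_cat ?hp ?hw; try (rewrite /N; lia).
    rewrite (blk_r' _ _ _ hp) blk_l // hp /N; lia.
  - rewrite map_argv_iota2 ?size_cat ?hp ?hw; try (rewrite /N; lia).
    rewrite (blk_r' _ _ _ hp) blk_l // hp /N; lia.
split.
  case=> w [hw]; case: (E w hw) => -> -> -> ->.
  case=> -[x1 [x2 [h1 [h2 ew]]]] [[y1 [hy1 e1]] [[y2 [hy2 e2]] [y3 [hy3 e3]]]].
  have hm := X_mul h1 h2.
  have [b1 b2 b3] := blk3 (dt_size h1) (dt_size h2) (dt_size hm).
  rewrite ew b1 in e1; rewrite ew b2 in e2; rewrite ew b3 in e3.
  have [f1 g1] := cat_inj (etrans (dt_size h1) (esym (dt_size hy1))) e1.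
  have [f2 g2] := cat_inj (etrans (dt_size h2) (esym (dt_size hy2))) e2.
  have [f3 g3] := cat_inj (etrans (dt_size hm) (esym (dt_size hy3))) e3.
  subst y1 y2 y3.
  exists (pi x1), (pi x2); split; first exact: pi_maps.
  split; first exact: pi_maps.
  by rewrite mulQ_pi // (split3 hp) g1 g2 g3.
case=> q1 [q2 [[x1 [h1 eq1]] [[x2 [h2 eq2]] ep]]]; subst q1 q2.
rewrite mulQ_pi // in ep.
have hm := X_mul h1 h2.
have hw : size (x1 ++ x2 ++ mulX x1 x2) = N.
  by rewrite !size_cat (dt_size h1) (dt_size h2) (dt_size hm) addnA.
exists (x1 ++ x2 ++ mulX x1 x2); split => //.
case: (E _ hw) => -> -> -> ->.
have [b1 b2 b3] := blk3 (dt_size h1) (dt_size h2) (dt_size hm).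
have [c1 c2 c3] := blk3 (dt_size (pi_in h1)) (dt_size (pi_in h2)) (dt_size (pi_in hm)).
rewrite ep b1 b2 b3 c1 c2 c3; split; first by exists x1, x2.
by split; [exists x1 | split; [exists x2 | exists (mulX x1 x2)]].
Qed.


Lemma Xcont2 U : dopen X U -> dopen2 X X (fun x1 x2 => Xs x1 /\ Xs x2 /\ U (mulX x1 x2)).
Proof. by case: HX => _ _ _ _ [[_ [_ h]] _]; apply: h. Qed.
Lemma Xcont_inv U : dopen X U -> dopen X (fun x => Xs x /\ U (invX x)).
Proof. by case: HX => _ _ _ _ [_ [_ h]]; apply: h. Qed.

Lemma Qgroup : is_dtgroup Q mulQ invQ eQ.
Proof.
have hmaps : maps2_into Q Q Q mulQ.
  by move=> q1 q2 h1 h2; apply: pi_maps; apply: X_mul; [apply: (proj1 (sec_spec h1)) | apply: (proj1 (sec_spec h2))].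
split.
- exact: (pi_maps X_e).
- move=> q1 q2 q3 [x1 [h1 ->]] [x2 [h2 ->]] [x3 [h3 ->]].
  by rewrite !mulQ_pi ?mA //; apply: X_mul.
- move=> q [x [hx ->]]; rewrite /eQ (mulQ_pi X_e hx) (mulQ_pi hx X_e).
  by rewrite m1l // m1r.
- move=> q [x [hx ->]]; rewrite invQ_pi // (mulQ_pi hx (X_inv hx)) (mulQ_pi (X_inv hx) hx).
  by rewrite mV // mVl.
split.
  split; split => //.
  - exact: mulQ_graph.
  - move=> U hU; split; first by move=> q1 q2 [h1 [h2 _]].
    move=> q1 q2 [hq1 [hq2 hu]].
    case: (sec_spec hq1) => hs1 e1; case: (sec_spec hq2) => hs2 e2.
    have hV := proj2 pi_cont U hU.
    case: (proj2 (Xcont2 hV) (sec q1) (sec q2)).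
      by split => //; split => //; split; [apply: X_mul | ].
    move=> U1 [U2 [hU1 [hU2 [hu1 [hu2 hW]]]]].
    exists (fun q => exists x, U1 x /\ q = pi x), (fun q => exists x, U2 x /\ q = pi x).
    split; first exact: pi_open.
    split; first exact: pi_open.
    split; first by exists (sec q1).
    split; first by exists (sec q2).
    move=> z1 z2 [w1 [hw1 ->]] [w2 [hw2 ->]].
    case: (hW _ _ hw1 hw2) => h1 [h2 [_ hv]].
    by split; [apply: pi_maps | split; [apply: pi_maps | rewrite mulQ_pi]].
split.
  by move=> q hq; apply: pi_maps; apply: X_inv; apply: (proj1 (sec_spec hq)).
move=> U hU.
have hV := proj2 pi_cont U hU.
have := pi_open (Xcont_inv hV); apply: dopen_ext => q; split.
  by case=> x [[hx [_ hu]] ->]; split; [apply: pi_maps | rewrite invQ_pi].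
case=> hq hu; case: (sec_spec hq) => hs e; exists (sec q); split => //.
by split => //; split => //; apply: X_inv.
Qed.

Lemma part2 : forall x y, Xs x -> Xs y -> pi (mulX x y) = mulQ (pi x) (pi y).
Proof. by move=> x y hx hy; rewrite mulQ_pi. Qed.

End Ch.

Unset Implicit Arguments.

Theorem proposition5p6 (M : Type) (lt : M -> M -> Prop) (add : M -> M -> M)
    (zero : M) (D : nat -> mset M -> Prop)
    (HM : dc_lomin_expansion lt add zero D)
    (G X : dtop D) (mulG : seq M -> seq M -> seq M) (invG : seq M -> seq M)
    (eG : seq M) (HG : is_dtgroup G mulG invG eG)
    (a : seq M -> seq M -> seq M) (Ha : is_daction G mulG eG X a) :
  (exists (Q : dtop D) (pi : seq M -> seq M), is_dquotient G X a Q pi) /\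
  (forall (mulX : seq M -> seq M -> seq M) (invX : seq M -> seq M)
          (eX : seq M),
     is_dtgroup X mulX invX eX ->
     (forall g, dt_set G g -> dt_set X g) ->
     (forall g h, dt_set G g -> dt_set G h -> mulG g h = mulX g h) ->
     (forall x g, dt_set X x -> dt_set G g ->
        dt_set G (mulX (mulX x g) (invX x))) ->
     (forall g x, dt_set G g -> dt_set X x -> a g x = mulX g x) ->
     exists (Q : dtop D) (pi : seq M -> seq M)
            (mulQ : seq M -> seq M -> seq M) (invQ : seq M -> seq M)
            (eQ : seq M),
       [/\ is_dquotient G X a Q pi, is_dtgroup Q mulQ invQ eQ
         & forall x y, dt_set X x -> dt_set X y ->
             pi (mulX x y) = mulQ (pi x) (pi y)]).
Proof.
split.
  by exists (Q HM HG Ha), (pi lt add zero G X a); apply: part1.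
move=> mulX invX eX HX hGX hmul hnorm hact.
exists (Q HM HG Ha), (pi lt add zero G X a), (mulQ lt add zero G X a mulX),
  (invQ lt add zero G X a invX), (eQ lt add zero G X a eX).
split.
- exact: part1.
- exact: (Qgroup HM HG Ha HX hGX hmul hnorm hact).
- by move=> x y hx hy; apply: (part2 HM HG Ha HX hGX hmul hnorm hact).
Qed.
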